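(* Let $G$ be a subcubic graph with $\mathrm{mad}(G)<\frac{20}{9}$ that has no good coloring, chosen with $|V(G)|+|E(G)|$ minimum among all such graphs. If a vertex $u$ of degree $3$ is adjacent to two $3$-threads, then $u$ is not adjacent to a further $2$-thread.
   Context: Graphs are simple; subcubic means maximum degree at most $3$; $\mathrm{mad}(G)=\max\{2|E(H)|/|V(H)|: H\subseteq G\}$. A $k$-thread is a path on $k$ vertices each of degree $2$ in $G$. A vertex $u$ is adjacent to a $k$-thread if there is a path $ux_1\cdots x_kw$ in $G$ where $x_1,\dots,x_k$ have degree $2$ (so $x_1\cdots x_k$ is a $k$-thread) and $w$ has degree $3$; the threads in the statement go through distinct neighbors of $u$. A $(1^2,2^2)$-packing edge-coloring is an assignment of colors $1_a,1_b,2_a,2_b$ to the edges such that each of the color classes $1_a,1_b$ is a matching and each of $2_a,2_b$ is an induced matching (any two edges of that color are at distance at least $3$ in the line graph). A good coloring is a $(1^2,2^2)$-packing edge-coloring that additionally satisfies: (I) an edge colored $2_a$ and an edge colored $2_b$ never share an endpoint; (II) if $e_1=u_1u_2$ and $e_2=v_1v_2$ share no endpoint and are colored $2_a$ and $2_b$ respectively, then there is no vertex $w$ such that $u_iwv_j$ is a path in $G$ for some $i,j\in\{1,2\}$. *)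

(* Defs.v *)
From HB Require Import structures.
From mathcomp Require Import all_boot all_order all_algebra.
Set Warnings "-notation-overridden,-ambiguous-paths".
Set Implicit Arguments. Unset Strict Implicit. Unset Printing Implicit Defensive.
Import Order.TTheory GRing.Theory Num.Theory.

Definition simple_graph (T : finType) (e : rel T) : Prop :=
  symmetric e /\ irreflexive e.

Section Graph.
Variables (T : finType) (e : rel T).

Definition deg (x : T) : nat := #|[set y | e x y]|.

Definition subcubic : Prop := forall x, deg x <= 3.

Definition edges : {set {set T}} :=
  [set [set x; y] | x in T, y in [set y | e x y]].

Definition subgraphs : {set {set T} * {set {set T}}} :=
  [set p : {set T} * {set {set T}} | (p.2 \subset edges) && [forall f in p.2, f \subset p.1]].

(* maximum average degree: max over nonempty subgraphs of 2|E(H)|/|V(H)|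
   (0 for the empty graph) *)
Definition mad : rat :=
  \big[Num.max/0%R]_(p in subgraphs | p.1 != set0)
     ((2 * #|p.2|)%:R / #|p.1|%:R)%R.

Inductive color := C1a | C1b | C2a | C2b.

(* an edge coloring assigns a color to each unordered pair; edge uv gets c [set u; v] *)
Definition is_matching_col (c : {set T} -> color) (k : color) : Prop :=
  forall u v w, e u v -> e u w -> v != w ->
    c [set u; v] = k -> c [set u; w] <> k.

(* induced matching: two distinct edges of color k are at distance >= 3 in the
   line graph: they share no endpoint and no edge joins them *)
Definition is_induced_matching_col (c : {set T} -> color) (k : color) : Prop :=
  forall u1 u2 v1 v2, e u1 u2 -> e v1 v2 ->
    [set u1; u2] != [set v1; v2] ->
    c [set u1; u2] = k -> c [set v1; v2] = k ->
    u1 != v1 /\ ~~ e u1 v1.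

Definition packing_coloring (c : {set T} -> color) : Prop :=
  [/\ is_matching_col c C1a, is_matching_col c C1b,
      is_induced_matching_col c C2a & is_induced_matching_col c C2b].

Definition good_coloring (c : {set T} -> color) : Prop :=
  [/\ packing_coloring c,
      (forall u v w, e u v -> e u w ->
         c [set u; v] = C2a -> c [set u; w] <> C2b) &
      (forall u1 u2 v1 v2 w, e u1 u2 -> e v1 v2 ->
         c [set u1; u2] = C2a -> c [set v1; v2] = C2b ->
         u1 != v1 -> u1 != v2 -> u2 != v1 -> u2 != v2 ->
         ~ (e u1 w /\ e w v1))].

Definition has_good_coloring : Prop := exists c, good_coloring c.

Definition adj_thread (u : T) (k : nat) (x : T) : Prop :=
  exists (p : seq T) (w : T),
    [/\ size p = k, x = head w p, path e u (rcons p w),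
        uniq (u :: rcons p w) & all (fun y => deg y == 2) p /\ deg w = 3].

End Graph.

(* Main.v *)
Require Import Defs.
From HB Require Import structures.
From mathcomp Require Import all_boot all_order all_algebra.
Set Implicit Arguments. Unset Strict Implicit. Unset Printing Implicit Defensive.

Definition color_eqb (a b : color) : bool :=
  match a, b with
  | C1a, C1a | C1b, C1b | C2a, C2a | C2b, C2b => true
  | _, _ => false end.
Lemma color_eqP : Equality.axiom color_eqb.
Proof. by case; case; constructor. Qed.
HB.instance Definition _ := hasDecEq.Build color color_eqP.

Definition is1 (k : color) := (k == C1a) || (k == C1b).
Definition is2 (k : color) := (k == C2a) || (k == C2b).
Definition flip1 (k : color) := match k with C1a => C1b | C1b => C1a | x => x end.
Definition flip2 (k : color) := match k with C2a => C2b | C2b => C2a | x => x end.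

Section Swap.
Variables (T : finType) (g : rel T).
Hypothesis gsym : symmetric g.

Lemma swap1_good (c : {set T} -> color) (K : pred {set T}) :
  good_coloring g c ->
  (forall x y z, g x y -> g x z -> y != z -> is1 (c [set x; y]) -> is1 (c [set x; z]) ->
     ([set x; y] \in K) = ([set x; z] \in K)) ->
  good_coloring g (fun f => if f \in K then flip1 (c f) else c f).
Proof.
case=> [[m1a m1b i2a i2b] hI hII] hK.
have E2a : forall f, ((if f \in K then flip1 (c f) else c f) = C2a) <-> (c f = C2a).
  by move=> f; case: (f \in K); case: (c f).
have E2b : forall f, ((if f \in K then flip1 (c f) else c f) = C2b) <-> (c f = C2b).
  by move=> f; case: (f \in K); case: (c f).
have M : forall k, k = C1a \/ k = C1b -> forall x y z, g x y -> g x z -> y != z ->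
   (if [set x; y] \in K then flip1 (c [set x; y]) else c [set x; y]) = k ->
   (if [set x; z] \in K then flip1 (c [set x; z]) else c [set x; z]) = k -> False.
  move=> k hk x y z gxy gxz yz.
  have hK' := hK x y z gxy gxz yz.
  case: hk => ->; case Ky: ([set x; y] \in K); case Kz: ([set x; z] \in K);
  case Hy: (c [set x; y]) => //; case Hz: (c [set x; z]) => //= _ _;
  try solve [ exact: (m1a _ _ _ gxy gxz yz Hy Hz) | exact: (m1b _ _ _ gxy gxz yz Hy Hz) ];
  by have := hK'; rewrite Hy Hz Ky Kz => /(_ erefl erefl).
split; first split.
- move=> x y z gxy gxz yz H1 H2; exact: (M C1a (or_introl erefl) x y z gxy gxz yz H1 H2).
- move=> x y z gxy gxz yz H1 H2; exact: (M C1b (or_intror erefl) x y z gxy gxz yz H1 H2).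
- move=> u1 u2 v1 v2 g1 g2 ne /E2a H1 /E2a H2; exact: (i2a _ _ _ _ g1 g2 ne H1 H2).
- move=> u1 u2 v1 v2 g1 g2 ne /E2b H1 /E2b H2; exact: (i2b _ _ _ _ g1 g2 ne H1 H2).
- move=> x y z gxy gxz /E2a H1 /E2b H2; exact: (hI _ _ _ gxy gxz H1 H2).
- move=> u1 u2 v1 v2 w g1 g2 /E2a H1 /E2b H2; exact: (hII _ _ _ _ w g1 g2 H1 H2).
Qed.

Definition close (x y : T) := (x == y) || g x y || [exists w, g x w && g w y].

Lemma swap2_good (c : {set T} -> color) (K : pred {set T}) :
  good_coloring g c ->
  (forall u1 u2 v1 v2, g u1 u2 -> g v1 v2 -> is2 (c [set u1; u2]) -> is2 (c [set v1; v2]) ->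
     close u1 v1 -> ([set u1; u2] \in K) = ([set v1; v2] \in K)) ->
  good_coloring g (fun f => if f \in K then flip2 (c f) else c f).
Proof.
case=> [[m1a m1b i2a i2b] hI hII] hK.
set c' := fun f => _.
have E1a : forall f, (c' f = C1a) <-> (c f = C1a).
  by move=> f; rewrite /c'; case: (f \in K); case: (c f).
have E1b : forall f, (c' f = C1b) <-> (c f = C1b).
  by move=> f; rewrite /c'; case: (f \in K); case: (c f).
have S2 : forall f k, c' f = k -> is2 k -> is2 (c f).
  by move=> f k; rewrite /c'; case: (f \in K); case: (c f) => //= <-.
have V : forall f h, (f \in K) = (h \in K) -> c' f = C2a -> c' h = C2b ->
          (c f = C2a /\ c h = C2b) \/ (c f = C2b /\ c h = C2a).
  by move=> f h; rewrite /c' => ->; case: (h \in K); case: (c f); case: (c h) => //=; auto.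
have W : forall f h k, (f \in K) = (h \in K) -> c' f = k -> c' h = k -> c f = c h.
  by move=> f h k; rewrite /c' => ->; case: (h \in K); case: (c f); case: (c h) => //= <-.
split; first split.
- by move=> x y z gxy gxz yz /E1a H1 /E1a H2; apply: (m1a x y z).
- by move=> x y z gxy gxz yz /E1b H1 /E1b H2; apply: (m1b x y z).
- move=> u1 u2 v1 v2 g1 g2 ne H1 H2.
  have [Hn|Hn] := boolP ((u1 != v1) && ~~ g u1 v1); first by case/andP: Hn.
  have Hc : close u1 v1.
    by move: Hn; rewrite negb_and !negbK /close => /orP [->|->] //; rewrite orbT.
  have := hK _ _ _ _ g1 g2 (S2 _ _ H1 erefl) (S2 _ _ H2 erefl) Hc => hk.
  have := W _ _ _ hk H1 H2 => eqc.
  move: H1; rewrite /c'; case: ([set u1; u2] \in K); case E: (c [set u1; u2]) => //= _.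
    by have := i2b _ _ _ _ g1 g2 ne E; rewrite -eqc E => /(_ erefl) []; move: Hn; rewrite negb_and !negbK => /orP[] /eqP.
  by have := i2a _ _ _ _ g1 g2 ne E; rewrite -eqc E => /(_ erefl) []; move: Hn; rewrite negb_and !negbK => /orP[] /eqP.
- move=> u1 u2 v1 v2 g1 g2 ne H1 H2.
  have [Hn|Hn] := boolP ((u1 != v1) && ~~ g u1 v1); first by case/andP: Hn.
  have Hc : close u1 v1.
    by move: Hn; rewrite negb_and !negbK /close => /orP [->|->] //; rewrite orbT.
  have := hK _ _ _ _ g1 g2 (S2 _ _ H1 erefl) (S2 _ _ H2 erefl) Hc => hk.
  have := W _ _ _ hk H1 H2 => eqc.
  move: H1; rewrite /c'; case: ([set u1; u2] \in K); case E: (c [set u1; u2]) => //= _.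
    by have := i2a _ _ _ _ g1 g2 ne E; rewrite -eqc E => /(_ erefl) []; move: Hn; rewrite negb_and !negbK => /orP[] /eqP.
  by have := i2b _ _ _ _ g1 g2 ne E; rewrite -eqc E => /(_ erefl) []; move: Hn; rewrite negb_and !negbK => /orP[] /eqP.
- move=> x y z gxy gxz H1 H2.
  have Hc : close y y by rewrite /close eqxx.
  have hk : ([set x; y] \in K) = ([set x; z] \in K).
    have := hK x y x z gxy gxz (S2 _ _ H1 erefl) (S2 _ _ H2 erefl).
    by apply; rewrite /close eqxx.
  case: (V _ _ hk H1 H2) => [[A B]|[A B]]; first exact: (hI x y z gxy gxz A B).
  exact: (hI x z y gxz gxy B A).
- move=> u1 u2 v1 v2 w g1 g2 H1 H2 n11 n12 n21 n22 [gw1 gw2].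
  have Hc : close u1 v1 by rewrite /close; apply/orP; right; apply/existsP; exists w; rewrite gw1 gw2.
  have hk := hK _ _ _ _ g1 g2 (S2 _ _ H1 erefl) (S2 _ _ H2 erefl) Hc.
  case: (V _ _ hk H1 H2) => [[A B]|[A B]]; first exact: (hII _ _ _ _ w g1 g2 A B n11 n12 n21 n22).
  apply: (hII _ _ _ _ w g2 g1 B A); rewrite 1?eq_sym //.
  by split; rewrite gsym.
Qed.

End Swap.
Lemma eqset2 (T : finType) (a b c d : T) :
  ([set a; b] == [set c; d]) = ((a == c) && (b == d)) || ((a == d) && (b == c)).
Proof.
rewrite eqEsubset !subUset !sub1set !inE.
case: (eqVneq a c) => [E1|ac]; case: (eqVneq a d) => [E2|ad];
case: (eqVneq b c) => [E3|bc]; case: (eqVneq b d) => [E4|bd];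
subst; rewrite ?eqxx ?orbT ?orbF ?andbT ?andbF //=;
by rewrite ?(eq_sym d c) ?(eq_sym c b) ?(eq_sym d b) ?(eq_sym c a) ?(eq_sym d a) ?(negbTE ac) ?(negbTE ad) ?(negbTE bc) ?(negbTE bd) ?eqxx ?orbF ?andbF ?orbT.
Qed.

Section Leaves.
Variables (X : finType) (R : rel X).
Hypothesis Rsym : symmetric R.
Definition leafR x := forall y1 y2, R x y1 -> R x y2 -> y1 = y2.
Hypothesis deg2 : forall x y1 y2 y3, R x y1 -> R x y2 -> R x y3 -> y1 = y2 \/ y1 = y3 \/ y2 = y3.

Lemma cross (S : pred X) c q : path R c q -> c \notin S -> last c q \in S ->
  exists y z, [/\ y \notin S, z \in S & R y z].
Proof.
elim: q c => [|x q IH] c /=; first by move=> _ /negP.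
case/andP => Rcx pq cS lS; case: (boolP (x \in S)) => xS; first by exists c, x; split.
exact: (IH x pq xS lS).
Qed.

Lemma split_facts a p1 z p2 : path R a (p1 ++ z :: p2) -> uniq (a :: p1 ++ z :: p2) ->
  [/\ R (last a p1) z, last a p1 \in a :: p1 &
  forall s p2', p2 = s :: p2' -> [/\ R z s, last a p1 != s & s \in z :: p2]].
Proof.
move=> P U; move: P; rewrite cat_path /= => /and3P [_ Rz pz].
move: U; rewrite -cat_cons cat_uniq => /and3P [_ hs _].
have ml : last a p1 \in a :: p1 by exact: mem_last.
split=> // s p2' E; subst p2; move: pz => /= /andP [Rs _]; split=> //.
  apply/eqP => E; move: hs; rewrite -E /= => /norP [_ /norP [/negP []]].
  by rewrite /= ml.
by rewrite !inE eqxx orbT.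
Qed.

Lemma three_leaves a b c : leafR a -> leafR b -> leafR c ->
  a != b -> a != c -> b != c -> connect R a b -> connect R a c -> False.
Proof.
move=> la lb lc ab ac bc /connectP [p0 pth0 Eb]; subst b.
move: lb ab bc; case/shortenP: pth0 => p pth up _ lb ab bc Hac.
have cS : c \notin a :: p.
  rewrite inE negb_or eq_sym ac /=; apply/negP => cp.
  case/splitPr: cp pth up bc => p1 p2 pth up bc.
  have [R1 m1 F] := split_facts pth up.
  case: p2 pth up bc F => [|s p2'] pth up bc F.
    by move: bc; rewrite last_cat /= eqxx.
  have [R2 ne2 _] := F s p2' erefl.
  by move: ne2; rewrite (lc _ _ (etrans (Rsym _ _) R1) R2) eqxx.
have Hca : connect R c a by rewrite (sym_connect_sym Rsym).
case/connectP: Hca => q pq Ea.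
have [y [z [yS zS Ryz]]] : exists y z, [/\ y \notin a :: p, z \in a :: p & R y z].
  by apply: (cross (S := [pred x | x \in a :: p]) pq cS); rewrite /= -Ea mem_head.
move: zS; rewrite inE => /orP [/eqP Ez|zp].
  subst z; case: p pth up lb ab bc cS yS => [|s p'] pth up lb ab bc cS yS; first by rewrite eqxx in ab.
  move: pth => /= /andP [Ras _].
  by move: yS; rewrite (la _ _ (etrans (Rsym _ _) Ryz) Ras) !inE eqxx orbT.
case/splitPr: zp pth up lb ab bc cS yS => p1 p2 pth up lb ab bc cS yS.
have [R1 m1 F] := split_facts pth up.
have yp : y != last a p1.
  by apply/eqP => E; move: yS; rewrite E -cat_cons mem_cat m1.
case: p2 pth up lb ab bc cS yS F => [|s p2'] pth up lb ab bc cS yS F.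
  move: lb; rewrite last_cat /= => lb.
  move: (lb _ _ (etrans (Rsym _ _) R1) (etrans (Rsym _ _) Ryz)).
  by move=> E; rewrite E eqxx in yp.
have [R2 ne2 s2] := F s p2' erefl.
have ys : y != s.
  by apply/eqP => E; move: yS; rewrite E -cat_cons mem_cat s2 orbT.
case: (deg2 (etrans (Rsym _ _) R1) R2 (etrans (Rsym _ _) Ryz)) => [E|[E|E]].
- by rewrite E eqxx in ne2.
- by rewrite E eqxx in yp.
- by rewrite E eqxx in ys.
Qed.
End Leaves.

Section Comp.
Variables (T : finType) (g : rel T).
Hypothesis gsym : symmetric g.
Hypothesis girr : irreflexive g.
Variable c : {set T} -> color.
Hypothesis cgood : good_coloring g c.

Definition isE (f : {set T}) := [exists x, exists y, g x y && (f == [set x; y])].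

Lemma isE_set x y : g x y -> isE [set x; y].
Proof. by move=> gxy; apply/existsP; exists x; apply/existsP; exists y; rewrite gxy eqxx. Qed.

Lemma edge_at f x : isE f -> x \in f -> exists y, g x y /\ f = [set x; y].
Proof.
case/existsP => a /existsP [b /andP [gab /eqP ->]].
rewrite !inE => /orP [/eqP ->|/eqP ->]; first by exists b.
by exists a; rewrite gsym setUC.
Qed.

Lemma set2_neq (x y z : T) : [set x; y] != [set x; z] -> y != z.
Proof. by apply: contraNneq => ->. Qed.

Lemma match1 x y z : g x y -> g x z -> y != z -> is1 (c [set x; y]) -> c [set x; y] = c [set x; z] -> False.
Proof.
case: cgood => [[m1a m1b _ _] _ _] gxy gxz yz.
rewrite /is1 => /orP [/eqP E|/eqP E] E2.
  by apply: (m1a x y z gxy gxz yz E); rewrite -E2.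
by apply: (m1b x y z gxy gxz yz E); rewrite -E2.
Qed.

Lemma three_at x f1 f2 f3 : isE f1 -> isE f2 -> isE f3 -> x \in f1 -> x \in f2 -> x \in f3 ->
  f1 != f2 -> f1 != f3 -> f2 != f3 -> is1 (c f1) -> is1 (c f2) -> is1 (c f3) -> False.
Proof.
move=> e1 e2 e3 x1 x2 x3.
have [y1 [g1 ->]] := edge_at e1 x1.
have [y2 [g2 ->]] := edge_at e2 x2.
have [y3 [g3 ->]] := edge_at e3 x3.
move=> n12 n13 n23 i1 i2 i3.
have d12 : c [set x; y1] != c [set x; y2].
  by apply/eqP; apply: (match1 g1 g2 (set2_neq n12) i1).
have d13 : c [set x; y1] != c [set x; y3].
  by apply/eqP; apply: (match1 g1 g3 (set2_neq n13) i1).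
have d23 : c [set x; y2] != c [set x; y3].
  by apply/eqP; apply: (match1 g2 g3 (set2_neq n23) i2).
move: i1 i2 i3 d12 d13 d23; rewrite /is1.
by case: (c [set x; y1]); case: (c [set x; y2]); case: (c [set x; y3]).
Qed.

Definition R1 (f h : {set T}) :=
  [&& f != h, isE f, isE h, is1 (c f), is1 (c h) & [exists x, (x \in f) && (x \in h)]].

Lemma R1sym : symmetric R1.
Proof.
move=> f h; rewrite /R1 [h == f]eq_sym; case: (f == h) => //=.
case: (isE f); case: (isE h) => //=; case: (is1 (c f)); case: (is1 (c h)) => //=.
apply/existsP/existsP => [[x /andP [a b]]|[x /andP [a b]]]; exists x; by rewrite a b.
Qed.

Lemma R1deg2 f h1 h2 h3 : R1 f h1 -> R1 f h2 -> R1 f h3 -> h1 = h2 \/ h1 = h3 \/ h2 = h3.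
Proof.
move=> /and5P [n1 ef e1 cf /andP [c1 /existsP [z1 /andP [z1f z1h]]]].
move=> /and5P [n2 _ e2 _ /andP [c2 /existsP [z2 /andP [z2f z2h]]]].
move=> /and5P [n3 _ e3 _ /andP [c3 /existsP [z3 /andP [z3f z3h]]]].
have [a [b [gab Ef]]] : exists a b, g a b /\ f = [set a; b].
  by case/existsP: ef => a /existsP [b /andP [gab /eqP ->]]; exists a, b.
have key : forall x (hi hj : {set T}), x \in f -> x \in hi -> x \in hj -> f != hi -> f != hj ->
    isE hi -> isE hj -> is1 (c hi) -> is1 (c hj) -> hi = hj.
  move=> x hi hj xf xi xj ni nj ei ej ci cj.
  case: (eqVneq hi hj) => // nij; exfalso.
  exact: (three_at ef ei ej xf xi xj ni nj nij cf ci cj).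
move: z1f z2f z3f; rewrite Ef !inE.
case/orP=> /eqP E1; case/orP=> /eqP E2; case/orP=> /eqP E3; subst;
  first [ left; apply: (key a); by rewrite ?Ef ?inE ?eqxx ?orbT
        | left; apply: (key b); by rewrite ?Ef ?inE ?eqxx ?orbT
        | right; left; apply: (key a); by rewrite ?Ef ?inE ?eqxx ?orbT
        | right; left; apply: (key b); by rewrite ?Ef ?inE ?eqxx ?orbT
        | right; right; apply: (key a); by rewrite ?Ef ?inE ?eqxx ?orbT
        | right; right; apply: (key b); by rewrite ?Ef ?inE ?eqxx ?orbT ].
Qed.

Lemma R1leaf b w : g b w -> (forall y, g b y -> y = w) -> leafR R1 [set b; w].
Proof.
move=> gbw uniqb.
have atw : forall h, R1 [set b; w] h -> [/\ w \in h, [set b; w] != h, isE h & is1 (c h)].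
  move=> h /and5P [n ef eh cf /andP [ch /existsP [x /andP [xf xh]]]].
  move: xf; rewrite !inE => /orP [/eqP E|/eqP E]; subst x; last by split.
  have [y [gy Eh]] := edge_at eh xh.
  by move: n; rewrite Eh (uniqb _ gy) eqxx.
move=> h1 h2 H1 H2.
have [w1 n1 e1 c1] := atw _ H1; have [w2 n2 e2 c2] := atw _ H2.
case/and5P: H1 => _ ef _ cf _.
case: (eqVneq h1 h2) => // n12; exfalso.
apply: (three_at ef e1 e2 _ w1 w2 n1 n2 n12 cf c1 c2).
by rewrite !inE eqxx orbT.
Qed.

Lemma R1_closed f0 x y z : g x y -> g x z -> y != z -> is1 (c [set x; y]) -> is1 (c [set x; z]) ->
  connect R1 f0 [set x; y] = connect R1 f0 [set x; z].
Proof.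
move=> gxy gxz yz i1 i2.
have R : R1 [set x; y] [set x; z].
  apply/and5P; split; [ | exact: isE_set | exact: isE_set | done | apply/andP; split=> //].
  - apply/eqP => E; have : z \in [set x; y] by rewrite E !inE eqxx orbT.
    rewrite !inE => /orP [/eqP E2|/eqP E2]; last by rewrite E2 eqxx in yz.
    by subst; rewrite girr in gxz.
  - by apply/existsP; exists x; rewrite !inE !eqxx.
have cs := sym_connect_sym R1sym.
apply/idP/idP => H.
  exact: (connect_trans H (connect1 R)).
by apply: (connect_trans H); apply: connect1; rewrite R1sym.
Qed.


Lemma close_sym x y : close g x y = close g y x.
Proof.
rewrite /close eq_sym gsym; congr (_ || _).
by apply/existsP/existsP => [[w /andP [a b]]|[w /andP [a b]]]; exists w;
  apply/andP; split; rewrite gsym.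
Qed.

Lemma shared2 f h v : isE f -> isE h -> v \in f -> v \in h -> c f = C2a -> c h = C2b -> False.
Proof.
move=> ef eh vf vh; have [p [gp ->]] := edge_at ef vf; have [q [gq ->]] := edge_at eh vh.
case: cgood => _ hI _; exact: hI.
Qed.

Lemma diff2_close f h x y : isE f -> isE h -> x \in f -> y \in h -> close g x y ->
  c f = C2a -> c h = C2b -> False.
Proof.
move=> ef eh xf yh cl ca cb.
case: (boolP [exists v, (v \in f) && (v \in h)]) => [/existsP [v /andP [vf vh]]|nsh].
  exact: (shared2 ef eh vf vh ca cb).
have nin : forall v, v \in f -> v \in h -> False.
  by move=> v vf vh; move/existsP: nsh; apply; exists v; rewrite vf vh.
have [x' [gx Ef]] := edge_at ef xf; have [y' [gy Eh]] := edge_at eh yh.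
have ne : forall a b, a \in f -> b \in h -> a != b.
  by move=> a b af bh; apply/eqP => E; subst; exact: (nin _ af bh).
have xf' : x' \in f by rewrite Ef !inE eqxx orbT.
have yh' : y' \in h by rewrite Eh !inE eqxx orbT.
case: cgood => _ _ hII.
move: cl; rewrite /close => /orP [/orP [/eqP E|gxy]|/existsP [w /andP [g1 g2]]].
- by subst; exact: (nin _ xf yh).
- rewrite Ef setUC in ca; rewrite Eh in cb.
  apply: (hII x' x y y' x _ gy ca cb (ne _ _ xf' yh) (ne _ _ xf' yh') (ne _ _ xf yh) (ne _ _ xf yh')).
    by rewrite gsym.
  by split=> //; rewrite gsym.
- rewrite Ef in ca; rewrite Eh in cb.
  exact: (hII x x' y y' w gx gy ca cb (ne _ _ xf yh) (ne _ _ xf yh') (ne _ _ xf' yh) (ne _ _ xf' yh')).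
Qed.

Definition R2 (f h : {set T}) :=
  [&& isE f, isE h, is2 (c f), is2 (c h) &
      [exists x, exists y, [&& x \in f, y \in h & close g x y]]].

Lemma R2sym : symmetric R2.
Proof.
move=> f h; rewrite /R2.
case: (isE f); case: (isE h) => //=; case: (is2 (c f)); case: (is2 (c h)) => //=.
apply/existsP/existsP => [[x /existsP [y /and3P [a b d]]]|[x /existsP [y /and3P [a b d]]]];
  exists y; apply/existsP; exists x; by rewrite a b close_sym d.
Qed.

Lemma R2mono f h : R2 f h -> c f = c h.
Proof.
case/and5P => ef eh cf ch /existsP [x /existsP [y /and3P [xf yh cl]]].
move: cf ch; rewrite /is2.
case E1: (c f); case E2: (c h) => //= _ _.
  by exfalso; exact: (diff2_close ef eh xf yh cl E1 E2).
by exfalso; rewrite close_sym in cl; exact: (diff2_close eh ef yh xf cl E2 E1).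
Qed.

Lemma R2conn f0 f : connect R2 f0 f -> c f = c f0.
Proof.
case/connectP => p; elim: p f0 => [|h p IH] f0 /=; first by move=> _ ->.
case/andP => r pp E; rewrite (IH h pp E); exact: (esym (R2mono r)).
Qed.

Lemma R2_closed f0 u1 u2 v1 v2 : g u1 u2 -> g v1 v2 -> is2 (c [set u1; u2]) -> is2 (c [set v1; v2]) ->
  close g u1 v1 -> connect R2 f0 [set u1; u2] = connect R2 f0 [set v1; v2].
Proof.
move=> g1 g2 i1 i2 cl.
have R : R2 [set u1; u2] [set v1; v2].
  apply/and5P; split; [exact: isE_set | exact: isE_set | done | done | ].
  by apply/existsP; exists u1; apply/existsP; exists v1; rewrite !inE !eqxx.
apply/idP/idP => H.
  exact: (connect_trans H (connect1 R)).
by apply: (connect_trans H); apply: connect1; rewrite R2sym.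
Qed.

End Comp.

Import Order.TTheory GRing.Theory Num.Theory.

Section Main.
Variables (T : finType) (e : rel T).
Hypothesis esym : symmetric e.
Hypothesis eirr : irreflexive e.
Variables u x1 a1 b1 w1 x2 a2 b2 w2 x3 a3 w3 : T.
Hypothesis Nu : forall y, e u y -> [|| y == x1, y == x2 | y == x3].
Hypothesis Nx1 : forall y, e x1 y -> (y == u) || (y == a1).
Hypothesis Nx2 : forall y, e x2 y -> (y == u) || (y == a2).
Hypothesis Nx3 : forall y, e x3 y -> (y == u) || (y == a3).
Hypothesis Na1 : forall y, e a1 y -> (y == x1) || (y == b1).
Hypothesis Na2 : forall y, e a2 y -> (y == x2) || (y == b2).
Hypothesis Nb1 : forall y, e b1 y -> (y == a1) || (y == w1).
Hypothesis Nb2 : forall y, e b2 y -> (y == a2) || (y == w2).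
Hypothesis Na3 : forall y, e a3 y -> (y == x3) || (y == w3).
Hypothesis Eux1 : e u x1.
Hypothesis Eux2 : e u x2.
Hypothesis Eux3 : e u x3.
Hypothesis Ex1a1 : e x1 a1.
Hypothesis Ex2a2 : e x2 a2.
Hypothesis Ex3a3 : e x3 a3.
Hypothesis Ea1b1 : e a1 b1.
Hypothesis Ea2b2 : e a2 b2.
Hypothesis Eb1w1 : e b1 w1.
Hypothesis Eb2w2 : e b2 w2.
Hypothesis Ea3w3 : e a3 w3.
Hypothesis Uc : uniq [:: u; x1; x2; x3; a1; a2; b1; b2; a3].
Hypothesis W1 : w1 \notin [:: u; x1; x2; x3; a1; a2; b1; b2; a3].
Hypothesis W2 : w2 \notin [:: u; x1; x2; x3; a1; a2; b1; b2; a3].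
Hypothesis W3 : w3 \notin [:: u; x1; x2; x3; a1; a2; b1; b2; a3].

Definition Int : {set T} := [set u; x1; x2; x3; a1; a2].
Definition e0 : rel T := fun x y => [&& e x y, x \notin Int & y \notin Int].

Lemma e0sym : symmetric e0.
Proof. by move=> x y; rewrite /e0 esym; case: (x \in Int); case: (y \in Int). Qed.
Lemma e0irr : irreflexive e0.
Proof. by move=> x; rewrite /e0 eirr. Qed.

Definition P1 := [set b1; w1].
Definition P2 := [set b2; w2].
Definition P3 := [set a3; w3].

Lemma n_u_x1 : u != x1. Proof. by apply/negP => /eqP E; move: Uc; rewrite E /= !inE !eqxx /= ?orbT /= ?andbF. Qed.
Lemma n_x1_u : x1 != u. Proof. by rewrite eq_sym n_u_x1. Qed.
Lemma n_u_x2 : u != x2. Proof. by apply/negP => /eqP E; move: Uc; rewrite E /= !inE !eqxx /= ?orbT /= ?andbF. Qed.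
Lemma n_x2_u : x2 != u. Proof. by rewrite eq_sym n_u_x2. Qed.
Lemma n_u_x3 : u != x3. Proof. by apply/negP => /eqP E; move: Uc; rewrite E /= !inE !eqxx /= ?orbT /= ?andbF. Qed.
Lemma n_x3_u : x3 != u. Proof. by rewrite eq_sym n_u_x3. Qed.
Lemma n_u_a1 : u != a1. Proof. by apply/negP => /eqP E; move: Uc; rewrite E /= !inE !eqxx /= ?orbT /= ?andbF. Qed.
Lemma n_a1_u : a1 != u. Proof. by rewrite eq_sym n_u_a1. Qed.
Lemma n_u_a2 : u != a2. Proof. by apply/negP => /eqP E; move: Uc; rewrite E /= !inE !eqxx /= ?orbT /= ?andbF. Qed.
Lemma n_a2_u : a2 != u. Proof. by rewrite eq_sym n_u_a2. Qed.
Lemma n_u_b1 : u != b1. Proof. by apply/negP => /eqP E; move: Uc; rewrite E /= !inE !eqxx /= ?orbT /= ?andbF. Qed.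
Lemma n_b1_u : b1 != u. Proof. by rewrite eq_sym n_u_b1. Qed.
Lemma n_u_b2 : u != b2. Proof. by apply/negP => /eqP E; move: Uc; rewrite E /= !inE !eqxx /= ?orbT /= ?andbF. Qed.
Lemma n_b2_u : b2 != u. Proof. by rewrite eq_sym n_u_b2. Qed.
Lemma n_u_a3 : u != a3. Proof. by apply/negP => /eqP E; move: Uc; rewrite E /= !inE !eqxx /= ?orbT /= ?andbF. Qed.
Lemma n_a3_u : a3 != u. Proof. by rewrite eq_sym n_u_a3. Qed.
Lemma n_x1_x2 : x1 != x2. Proof. by apply/negP => /eqP E; move: Uc; rewrite E /= !inE !eqxx /= ?orbT /= ?andbF. Qed.
Lemma n_x2_x1 : x2 != x1. Proof. by rewrite eq_sym n_x1_x2. Qed.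
Lemma n_x1_x3 : x1 != x3. Proof. by apply/negP => /eqP E; move: Uc; rewrite E /= !inE !eqxx /= ?orbT /= ?andbF. Qed.
Lemma n_x3_x1 : x3 != x1. Proof. by rewrite eq_sym n_x1_x3. Qed.
Lemma n_x1_a1 : x1 != a1. Proof. by apply/negP => /eqP E; move: Uc; rewrite E /= !inE !eqxx /= ?orbT /= ?andbF. Qed.
Lemma n_a1_x1 : a1 != x1. Proof. by rewrite eq_sym n_x1_a1. Qed.
Lemma n_x1_a2 : x1 != a2. Proof. by apply/negP => /eqP E; move: Uc; rewrite E /= !inE !eqxx /= ?orbT /= ?andbF. Qed.
Lemma n_a2_x1 : a2 != x1. Proof. by rewrite eq_sym n_x1_a2. Qed.
Lemma n_x1_b1 : x1 != b1. Proof. by apply/negP => /eqP E; move: Uc; rewrite E /= !inE !eqxx /= ?orbT /= ?andbF. Qed.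
Lemma n_b1_x1 : b1 != x1. Proof. by rewrite eq_sym n_x1_b1. Qed.
Lemma n_x1_b2 : x1 != b2. Proof. by apply/negP => /eqP E; move: Uc; rewrite E /= !inE !eqxx /= ?orbT /= ?andbF. Qed.
Lemma n_b2_x1 : b2 != x1. Proof. by rewrite eq_sym n_x1_b2. Qed.
Lemma n_x1_a3 : x1 != a3. Proof. by apply/negP => /eqP E; move: Uc; rewrite E /= !inE !eqxx /= ?orbT /= ?andbF. Qed.
Lemma n_a3_x1 : a3 != x1. Proof. by rewrite eq_sym n_x1_a3. Qed.
Lemma n_x2_x3 : x2 != x3. Proof. by apply/negP => /eqP E; move: Uc; rewrite E /= !inE !eqxx /= ?orbT /= ?andbF. Qed.
Lemma n_x3_x2 : x3 != x2. Proof. by rewrite eq_sym n_x2_x3. Qed.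
Lemma n_x2_a1 : x2 != a1. Proof. by apply/negP => /eqP E; move: Uc; rewrite E /= !inE !eqxx /= ?orbT /= ?andbF. Qed.
Lemma n_a1_x2 : a1 != x2. Proof. by rewrite eq_sym n_x2_a1. Qed.
Lemma n_x2_a2 : x2 != a2. Proof. by apply/negP => /eqP E; move: Uc; rewrite E /= !inE !eqxx /= ?orbT /= ?andbF. Qed.
Lemma n_a2_x2 : a2 != x2. Proof. by rewrite eq_sym n_x2_a2. Qed.
Lemma n_x2_b1 : x2 != b1. Proof. by apply/negP => /eqP E; move: Uc; rewrite E /= !inE !eqxx /= ?orbT /= ?andbF. Qed.
Lemma n_b1_x2 : b1 != x2. Proof. by rewrite eq_sym n_x2_b1. Qed.
Lemma n_x2_b2 : x2 != b2. Proof. by apply/negP => /eqP E; move: Uc; rewrite E /= !inE !eqxx /= ?orbT /= ?andbF. Qed.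
Lemma n_b2_x2 : b2 != x2. Proof. by rewrite eq_sym n_x2_b2. Qed.
Lemma n_x2_a3 : x2 != a3. Proof. by apply/negP => /eqP E; move: Uc; rewrite E /= !inE !eqxx /= ?orbT /= ?andbF. Qed.
Lemma n_a3_x2 : a3 != x2. Proof. by rewrite eq_sym n_x2_a3. Qed.
Lemma n_x3_a1 : x3 != a1. Proof. by apply/negP => /eqP E; move: Uc; rewrite E /= !inE !eqxx /= ?orbT /= ?andbF. Qed.
Lemma n_a1_x3 : a1 != x3. Proof. by rewrite eq_sym n_x3_a1. Qed.
Lemma n_x3_a2 : x3 != a2. Proof. by apply/negP => /eqP E; move: Uc; rewrite E /= !inE !eqxx /= ?orbT /= ?andbF. Qed.
Lemma n_a2_x3 : a2 != x3. Proof. by rewrite eq_sym n_x3_a2. Qed.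
Lemma n_x3_b1 : x3 != b1. Proof. by apply/negP => /eqP E; move: Uc; rewrite E /= !inE !eqxx /= ?orbT /= ?andbF. Qed.
Lemma n_b1_x3 : b1 != x3. Proof. by rewrite eq_sym n_x3_b1. Qed.
Lemma n_x3_b2 : x3 != b2. Proof. by apply/negP => /eqP E; move: Uc; rewrite E /= !inE !eqxx /= ?orbT /= ?andbF. Qed.
Lemma n_b2_x3 : b2 != x3. Proof. by rewrite eq_sym n_x3_b2. Qed.
Lemma n_x3_a3 : x3 != a3. Proof. by apply/negP => /eqP E; move: Uc; rewrite E /= !inE !eqxx /= ?orbT /= ?andbF. Qed.
Lemma n_a3_x3 : a3 != x3. Proof. by rewrite eq_sym n_x3_a3. Qed.
Lemma n_a1_a2 : a1 != a2. Proof. by apply/negP => /eqP E; move: Uc; rewrite E /= !inE !eqxx /= ?orbT /= ?andbF. Qed.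
Lemma n_a2_a1 : a2 != a1. Proof. by rewrite eq_sym n_a1_a2. Qed.
Lemma n_a1_b1 : a1 != b1. Proof. by apply/negP => /eqP E; move: Uc; rewrite E /= !inE !eqxx /= ?orbT /= ?andbF. Qed.
Lemma n_b1_a1 : b1 != a1. Proof. by rewrite eq_sym n_a1_b1. Qed.
Lemma n_a1_b2 : a1 != b2. Proof. by apply/negP => /eqP E; move: Uc; rewrite E /= !inE !eqxx /= ?orbT /= ?andbF. Qed.
Lemma n_b2_a1 : b2 != a1. Proof. by rewrite eq_sym n_a1_b2. Qed.
Lemma n_a1_a3 : a1 != a3. Proof. by apply/negP => /eqP E; move: Uc; rewrite E /= !inE !eqxx /= ?orbT /= ?andbF. Qed.
Lemma n_a3_a1 : a3 != a1. Proof. by rewrite eq_sym n_a1_a3. Qed.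
Lemma n_a2_b1 : a2 != b1. Proof. by apply/negP => /eqP E; move: Uc; rewrite E /= !inE !eqxx /= ?orbT /= ?andbF. Qed.
Lemma n_b1_a2 : b1 != a2. Proof. by rewrite eq_sym n_a2_b1. Qed.
Lemma n_a2_b2 : a2 != b2. Proof. by apply/negP => /eqP E; move: Uc; rewrite E /= !inE !eqxx /= ?orbT /= ?andbF. Qed.
Lemma n_b2_a2 : b2 != a2. Proof. by rewrite eq_sym n_a2_b2. Qed.
Lemma n_a2_a3 : a2 != a3. Proof. by apply/negP => /eqP E; move: Uc; rewrite E /= !inE !eqxx /= ?orbT /= ?andbF. Qed.
Lemma n_a3_a2 : a3 != a2. Proof. by rewrite eq_sym n_a2_a3. Qed.
Lemma n_b1_b2 : b1 != b2. Proof. by apply/negP => /eqP E; move: Uc; rewrite E /= !inE !eqxx /= ?orbT /= ?andbF. Qed.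
Lemma n_b2_b1 : b2 != b1. Proof. by rewrite eq_sym n_b1_b2. Qed.
Lemma n_b1_a3 : b1 != a3. Proof. by apply/negP => /eqP E; move: Uc; rewrite E /= !inE !eqxx /= ?orbT /= ?andbF. Qed.
Lemma n_a3_b1 : a3 != b1. Proof. by rewrite eq_sym n_b1_a3. Qed.
Lemma n_b2_a3 : b2 != a3. Proof. by apply/negP => /eqP E; move: Uc; rewrite E /= !inE !eqxx /= ?orbT /= ?andbF. Qed.
Lemma n_a3_b2 : a3 != b2. Proof. by rewrite eq_sym n_b2_a3. Qed.
Lemma n_w1_u : w1 != u. Proof. by apply/negP => /eqP E; move: W1; rewrite E !inE !eqxx ?orbT. Qed.
Lemma n_u_w1 : u != w1. Proof. by rewrite eq_sym n_w1_u. Qed.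
Lemma n_w1_x1 : w1 != x1. Proof. by apply/negP => /eqP E; move: W1; rewrite E !inE !eqxx ?orbT. Qed.
Lemma n_x1_w1 : x1 != w1. Proof. by rewrite eq_sym n_w1_x1. Qed.
Lemma n_w1_x2 : w1 != x2. Proof. by apply/negP => /eqP E; move: W1; rewrite E !inE !eqxx ?orbT. Qed.
Lemma n_x2_w1 : x2 != w1. Proof. by rewrite eq_sym n_w1_x2. Qed.
Lemma n_w1_x3 : w1 != x3. Proof. by apply/negP => /eqP E; move: W1; rewrite E !inE !eqxx ?orbT. Qed.
Lemma n_x3_w1 : x3 != w1. Proof. by rewrite eq_sym n_w1_x3. Qed.
Lemma n_w1_a1 : w1 != a1. Proof. by apply/negP => /eqP E; move: W1; rewrite E !inE !eqxx ?orbT. Qed.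
Lemma n_a1_w1 : a1 != w1. Proof. by rewrite eq_sym n_w1_a1. Qed.
Lemma n_w1_a2 : w1 != a2. Proof. by apply/negP => /eqP E; move: W1; rewrite E !inE !eqxx ?orbT. Qed.
Lemma n_a2_w1 : a2 != w1. Proof. by rewrite eq_sym n_w1_a2. Qed.
Lemma n_w1_b1 : w1 != b1. Proof. by apply/negP => /eqP E; move: W1; rewrite E !inE !eqxx ?orbT. Qed.
Lemma n_b1_w1 : b1 != w1. Proof. by rewrite eq_sym n_w1_b1. Qed.
Lemma n_w1_b2 : w1 != b2. Proof. by apply/negP => /eqP E; move: W1; rewrite E !inE !eqxx ?orbT. Qed.
Lemma n_b2_w1 : b2 != w1. Proof. by rewrite eq_sym n_w1_b2. Qed.
Lemma n_w1_a3 : w1 != a3. Proof. by apply/negP => /eqP E; move: W1; rewrite E !inE !eqxx ?orbT. Qed.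
Lemma n_a3_w1 : a3 != w1. Proof. by rewrite eq_sym n_w1_a3. Qed.
Lemma n_w2_u : w2 != u. Proof. by apply/negP => /eqP E; move: W2; rewrite E !inE !eqxx ?orbT. Qed.
Lemma n_u_w2 : u != w2. Proof. by rewrite eq_sym n_w2_u. Qed.
Lemma n_w2_x1 : w2 != x1. Proof. by apply/negP => /eqP E; move: W2; rewrite E !inE !eqxx ?orbT. Qed.
Lemma n_x1_w2 : x1 != w2. Proof. by rewrite eq_sym n_w2_x1. Qed.
Lemma n_w2_x2 : w2 != x2. Proof. by apply/negP => /eqP E; move: W2; rewrite E !inE !eqxx ?orbT. Qed.
Lemma n_x2_w2 : x2 != w2. Proof. by rewrite eq_sym n_w2_x2. Qed.
Lemma n_w2_x3 : w2 != x3. Proof. by apply/negP => /eqP E; move: W2; rewrite E !inE !eqxx ?orbT. Qed.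
Lemma n_x3_w2 : x3 != w2. Proof. by rewrite eq_sym n_w2_x3. Qed.
Lemma n_w2_a1 : w2 != a1. Proof. by apply/negP => /eqP E; move: W2; rewrite E !inE !eqxx ?orbT. Qed.
Lemma n_a1_w2 : a1 != w2. Proof. by rewrite eq_sym n_w2_a1. Qed.
Lemma n_w2_a2 : w2 != a2. Proof. by apply/negP => /eqP E; move: W2; rewrite E !inE !eqxx ?orbT. Qed.
Lemma n_a2_w2 : a2 != w2. Proof. by rewrite eq_sym n_w2_a2. Qed.
Lemma n_w2_b1 : w2 != b1. Proof. by apply/negP => /eqP E; move: W2; rewrite E !inE !eqxx ?orbT. Qed.
Lemma n_b1_w2 : b1 != w2. Proof. by rewrite eq_sym n_w2_b1. Qed.
Lemma n_w2_b2 : w2 != b2. Proof. by apply/negP => /eqP E; move: W2; rewrite E !inE !eqxx ?orbT. Qed.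
Lemma n_b2_w2 : b2 != w2. Proof. by rewrite eq_sym n_w2_b2. Qed.
Lemma n_w2_a3 : w2 != a3. Proof. by apply/negP => /eqP E; move: W2; rewrite E !inE !eqxx ?orbT. Qed.
Lemma n_a3_w2 : a3 != w2. Proof. by rewrite eq_sym n_w2_a3. Qed.
Lemma n_w3_u : w3 != u. Proof. by apply/negP => /eqP E; move: W3; rewrite E !inE !eqxx ?orbT. Qed.
Lemma n_u_w3 : u != w3. Proof. by rewrite eq_sym n_w3_u. Qed.
Lemma n_w3_x1 : w3 != x1. Proof. by apply/negP => /eqP E; move: W3; rewrite E !inE !eqxx ?orbT. Qed.
Lemma n_x1_w3 : x1 != w3. Proof. by rewrite eq_sym n_w3_x1. Qed.
Lemma n_w3_x2 : w3 != x2. Proof. by apply/negP => /eqP E; move: W3; rewrite E !inE !eqxx ?orbT. Qed.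
Lemma n_x2_w3 : x2 != w3. Proof. by rewrite eq_sym n_w3_x2. Qed.
Lemma n_w3_x3 : w3 != x3. Proof. by apply/negP => /eqP E; move: W3; rewrite E !inE !eqxx ?orbT. Qed.
Lemma n_x3_w3 : x3 != w3. Proof. by rewrite eq_sym n_w3_x3. Qed.
Lemma n_w3_a1 : w3 != a1. Proof. by apply/negP => /eqP E; move: W3; rewrite E !inE !eqxx ?orbT. Qed.
Lemma n_a1_w3 : a1 != w3. Proof. by rewrite eq_sym n_w3_a1. Qed.
Lemma n_w3_a2 : w3 != a2. Proof. by apply/negP => /eqP E; move: W3; rewrite E !inE !eqxx ?orbT. Qed.
Lemma n_a2_w3 : a2 != w3. Proof. by rewrite eq_sym n_w3_a2. Qed.
Lemma n_w3_b1 : w3 != b1. Proof. by apply/negP => /eqP E; move: W3; rewrite E !inE !eqxx ?orbT. Qed.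
Lemma n_b1_w3 : b1 != w3. Proof. by rewrite eq_sym n_w3_b1. Qed.
Lemma n_w3_b2 : w3 != b2. Proof. by apply/negP => /eqP E; move: W3; rewrite E !inE !eqxx ?orbT. Qed.
Lemma n_b2_w3 : b2 != w3. Proof. by rewrite eq_sym n_w3_b2. Qed.
Lemma n_w3_a3 : w3 != a3. Proof. by apply/negP => /eqP E; move: W3; rewrite E !inE !eqxx ?orbT. Qed.
Lemma n_a3_w3 : a3 != w3. Proof. by rewrite eq_sym n_w3_a3. Qed.
Hint Resolve n_u_x1 n_x1_u n_u_x2 n_x2_u n_u_x3 n_x3_u n_u_a1 n_a1_u n_u_a2 n_a2_u n_u_b1 n_b1_u n_u_b2 n_b2_u n_u_a3 n_a3_u n_x1_x2 n_x2_x1 n_x1_x3 n_x3_x1 n_x1_a1 n_a1_x1 n_x1_a2 n_a2_x1 n_x1_b1 n_b1_x1 n_x1_b2 n_b2_x1 n_x1_a3 n_a3_x1 n_x2_x3 n_x3_x2 n_x2_a1 n_a1_x2 n_x2_a2 n_a2_x2 n_x2_b1 n_b1_x2 n_x2_b2 n_b2_x2 n_x2_a3 n_a3_x2 n_x3_a1 n_a1_x3 n_x3_a2 n_a2_x3 n_x3_b1 n_b1_x3 n_x3_b2 n_b2_x3 n_x3_a3 n_a3_x3 n_a1_a2 n_a2_a1 n_a1_b1 n_b1_a1 n_a1_b2 n_b2_a1 n_a1_a3 n_a3_a1 n_a2_b1 n_b1_a2 n_a2_b2 n_b2_a2 n_a2_a3 n_a3_a2 n_b1_b2 n_b2_b1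 n_b1_a3 n_a3_b1 n_b2_a3 n_a3_b2 n_w1_u n_u_w1 n_w1_x1 n_x1_w1 n_w1_x2 n_x2_w1 n_w1_x3 n_x3_w1 n_w1_a1 n_a1_w1 n_w1_a2 n_a2_w1 n_w1_b1 n_b1_w1 n_w1_b2 n_b2_w1 n_w1_a3 n_a3_w1 n_w2_u n_u_w2 n_w2_x1 n_x1_w2 n_w2_x2 n_x2_w2 n_w2_x3 n_x3_w2 n_w2_a1 n_a1_w2 n_w2_a2 n_a2_w2 n_w2_b1 n_b1_w2 n_w2_b2 n_b2_w2 n_w2_a3 n_a3_w2 n_w3_u n_u_w3 n_w3_x1 n_x1_w3 n_w3_x2 n_x2_w3 n_w3_x3 n_x3_w3 n_w3_a1 n_a1_w3 n_w3_a2 n_a2_w3 n_w3_b1 n_b1_w3 n_w3_b2 n_b2_w3 n_w3_a3 n_a3_w3 : core.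

Lemma inI_u : u \in Int. Proof. by rewrite !inE eqxx. Qed.
Lemma inI_x1 : x1 \in Int. Proof. by rewrite !inE eqxx ?orbT. Qed.
Lemma inI_x2 : x2 \in Int. Proof. by rewrite !inE eqxx ?orbT. Qed.
Lemma inI_x3 : x3 \in Int. Proof. by rewrite !inE eqxx ?orbT. Qed.
Lemma inI_a1 : a1 \in Int. Proof. by rewrite !inE eqxx ?orbT. Qed.
Lemma inI_a2 : a2 \in Int. Proof. by rewrite !inE eqxx ?orbT. Qed.
Lemma niI_b1 : (b1 \in Int) = false. Proof. by rewrite !inE !(negbTE (n_b1_u)) !(negbTE n_b1_x1) !(negbTE n_b1_x2) !(negbTE n_b1_x3) !(negbTE n_b1_a1) !(negbTE n_b1_a2). Qed.
Lemma niI_b2 : (b2 \in Int) = false. Proof. by rewrite !inE !(negbTE (n_b2_u)) !(negbTE n_b2_x1) !(negbTE n_b2_x2) !(negbTE n_b2_x3) !(negbTE n_b2_a1) !(negbTE n_b2_a2). Qed.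
Lemma niI_a3 : (a3 \in Int) = false. Proof. by rewrite !inE !(negbTE (n_a3_u)) !(negbTE n_a3_x1) !(negbTE n_a3_x2) !(negbTE n_a3_x3) !(negbTE n_a3_a1) !(negbTE n_a3_a2). Qed.
Lemma niI_w1 : (w1 \in Int) = false. Proof. by rewrite !inE !(negbTE (n_w1_u)) !(negbTE n_w1_x1) !(negbTE n_w1_x2) !(negbTE n_w1_x3) !(negbTE n_w1_a1) !(negbTE n_w1_a2). Qed.
Lemma niI_w2 : (w2 \in Int) = false. Proof. by rewrite !inE !(negbTE (n_w2_u)) !(negbTE n_w2_x1) !(negbTE n_w2_x2) !(negbTE n_w2_x3) !(negbTE n_w2_a1) !(negbTE n_w2_a2). Qed.
Lemma niI_w3 : (w3 \in Int) = false. Proof. by rewrite !inE !(negbTE (n_w3_u)) !(negbTE n_w3_x1) !(negbTE n_w3_x2) !(negbTE n_w3_x3) !(negbTE n_w3_a1) !(negbTE n_w3_a2). Qed.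
Definition IntE := (inI_u, inI_x1, inI_x2, inI_x3, inI_a1, inI_a2, niI_b1, niI_b2, niI_a3, niI_w1, niI_w2, niI_w3).

Lemma e0_sub x y : e0 x y -> e x y.
Proof. by case/and3P. Qed.

Lemma simple_e0 : simple_graph e0.
Proof. split; [exact: e0sym | exact: e0irr]. Qed.

Lemma deg_e0 x : deg e0 x <= deg e x.
Proof. by apply: subset_leq_card; apply/subsetP => y; rewrite !inE => /e0_sub. Qed.

Lemma edges_sub : edges e0 \subset edges e.
Proof.
apply/subsetP => f /imset2P [x y _]; rewrite inE => /e0_sub H ->.
by apply/imset2P; exists x y; rewrite ?inE.
Qed.

Lemma edges_proper : edges e0 \proper edges e.
Proof.
rewrite properE edges_sub /=; apply/subsetPn; exists [set u; x1].
  by apply/imset2P; exists u x1; rewrite ?inE.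
apply/imset2P => [[x y _]]; rewrite inE => /and3P [_ nx ny] E.
have : u \in [set x; y] by rewrite -E !inE eqxx.
by rewrite !inE => /orP [] /eqP Eu; [move: nx | move: ny]; rewrite -Eu IntE.
Qed.

Lemma mad_e0 : (mad e0 <= mad e)%R.
Proof.
apply: subset_bigmax; apply/subsetP => p; rewrite !inE => /andP [s1 ->].
by rewrite (subset_trans s1 edges_sub).
Qed.

Lemma size_e0 : (#|edges e0| < #|edges e|)%N.
Proof. exact: proper_card edges_proper. Qed.

Lemma e_u_x1 : (u == x1) = false. Proof. exact: (negbTE n_u_x1). Qed.
Lemma e_u_x2 : (u == x2) = false. Proof. exact: (negbTE n_u_x2). Qed.
Lemma e_u_x3 : (u == x3) = false. Proof. exact: (negbTE n_u_x3). Qed.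
Lemma e_u_a1 : (u == a1) = false. Proof. exact: (negbTE n_u_a1). Qed.
Lemma e_u_a2 : (u == a2) = false. Proof. exact: (negbTE n_u_a2). Qed.
Lemma e_u_b1 : (u == b1) = false. Proof. exact: (negbTE n_u_b1). Qed.
Lemma e_u_b2 : (u == b2) = false. Proof. exact: (negbTE n_u_b2). Qed.
Lemma e_u_a3 : (u == a3) = false. Proof. exact: (negbTE n_u_a3). Qed.
Lemma e_u_w1 : (u == w1) = false. Proof. exact: (negbTE n_u_w1). Qed.
Lemma e_u_w2 : (u == w2) = false. Proof. exact: (negbTE n_u_w2). Qed.
Lemma e_u_w3 : (u == w3) = false. Proof. exact: (negbTE n_u_w3). Qed.
Lemma e_x1_u : (x1 == u) = false. Proof. exact: (negbTE n_x1_u). Qed.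
Lemma e_x1_x2 : (x1 == x2) = false. Proof. exact: (negbTE n_x1_x2). Qed.
Lemma e_x1_x3 : (x1 == x3) = false. Proof. exact: (negbTE n_x1_x3). Qed.
Lemma e_x1_a1 : (x1 == a1) = false. Proof. exact: (negbTE n_x1_a1). Qed.
Lemma e_x1_a2 : (x1 == a2) = false. Proof. exact: (negbTE n_x1_a2). Qed.
Lemma e_x1_b1 : (x1 == b1) = false. Proof. exact: (negbTE n_x1_b1). Qed.
Lemma e_x1_b2 : (x1 == b2) = false. Proof. exact: (negbTE n_x1_b2). Qed.
Lemma e_x1_a3 : (x1 == a3) = false. Proof. exact: (negbTE n_x1_a3). Qed.
Lemma e_x1_w1 : (x1 == w1) = false. Proof. exact: (negbTE n_x1_w1). Qed.
Lemma e_x1_w2 : (x1 == w2) = false. Proof. exact: (negbTE n_x1_w2). Qed.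
Lemma e_x1_w3 : (x1 == w3) = false. Proof. exact: (negbTE n_x1_w3). Qed.
Lemma e_x2_u : (x2 == u) = false. Proof. exact: (negbTE n_x2_u). Qed.
Lemma e_x2_x1 : (x2 == x1) = false. Proof. exact: (negbTE n_x2_x1). Qed.
Lemma e_x2_x3 : (x2 == x3) = false. Proof. exact: (negbTE n_x2_x3). Qed.
Lemma e_x2_a1 : (x2 == a1) = false. Proof. exact: (negbTE n_x2_a1). Qed.
Lemma e_x2_a2 : (x2 == a2) = false. Proof. exact: (negbTE n_x2_a2). Qed.
Lemma e_x2_b1 : (x2 == b1) = false. Proof. exact: (negbTE n_x2_b1). Qed.
Lemma e_x2_b2 : (x2 == b2) = false. Proof. exact: (negbTE n_x2_b2). Qed.
Lemma e_x2_a3 : (x2 == a3) = false. Proof. exact: (negbTE n_x2_a3). Qed.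
Lemma e_x2_w1 : (x2 == w1) = false. Proof. exact: (negbTE n_x2_w1). Qed.
Lemma e_x2_w2 : (x2 == w2) = false. Proof. exact: (negbTE n_x2_w2). Qed.
Lemma e_x2_w3 : (x2 == w3) = false. Proof. exact: (negbTE n_x2_w3). Qed.
Lemma e_x3_u : (x3 == u) = false. Proof. exact: (negbTE n_x3_u). Qed.
Lemma e_x3_x1 : (x3 == x1) = false. Proof. exact: (negbTE n_x3_x1). Qed.
Lemma e_x3_x2 : (x3 == x2) = false. Proof. exact: (negbTE n_x3_x2). Qed.
Lemma e_x3_a1 : (x3 == a1) = false. Proof. exact: (negbTE n_x3_a1). Qed.
Lemma e_x3_a2 : (x3 == a2) = false. Proof. exact: (negbTE n_x3_a2). Qed.
Lemma e_x3_b1 : (x3 == b1) = false. Proof. exact: (negbTE n_x3_b1). Qed.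
Lemma e_x3_b2 : (x3 == b2) = false. Proof. exact: (negbTE n_x3_b2). Qed.
Lemma e_x3_a3 : (x3 == a3) = false. Proof. exact: (negbTE n_x3_a3). Qed.
Lemma e_x3_w1 : (x3 == w1) = false. Proof. exact: (negbTE n_x3_w1). Qed.
Lemma e_x3_w2 : (x3 == w2) = false. Proof. exact: (negbTE n_x3_w2). Qed.
Lemma e_x3_w3 : (x3 == w3) = false. Proof. exact: (negbTE n_x3_w3). Qed.
Lemma e_a1_u : (a1 == u) = false. Proof. exact: (negbTE n_a1_u). Qed.
Lemma e_a1_x1 : (a1 == x1) = false. Proof. exact: (negbTE n_a1_x1). Qed.
Lemma e_a1_x2 : (a1 == x2) = false. Proof. exact: (negbTE n_a1_x2). Qed.
Lemma e_a1_x3 : (a1 == x3) = false. Proof. exact: (negbTE n_a1_x3). Qed.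
Lemma e_a1_a2 : (a1 == a2) = false. Proof. exact: (negbTE n_a1_a2). Qed.
Lemma e_a1_b1 : (a1 == b1) = false. Proof. exact: (negbTE n_a1_b1). Qed.
Lemma e_a1_b2 : (a1 == b2) = false. Proof. exact: (negbTE n_a1_b2). Qed.
Lemma e_a1_a3 : (a1 == a3) = false. Proof. exact: (negbTE n_a1_a3). Qed.
Lemma e_a1_w1 : (a1 == w1) = false. Proof. exact: (negbTE n_a1_w1). Qed.
Lemma e_a1_w2 : (a1 == w2) = false. Proof. exact: (negbTE n_a1_w2). Qed.
Lemma e_a1_w3 : (a1 == w3) = false. Proof. exact: (negbTE n_a1_w3). Qed.
Lemma e_a2_u : (a2 == u) = false. Proof. exact: (negbTE n_a2_u). Qed.
Lemma e_a2_x1 : (a2 == x1) = false. Proof. exact: (negbTE n_a2_x1). Qed.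
Lemma e_a2_x2 : (a2 == x2) = false. Proof. exact: (negbTE n_a2_x2). Qed.
Lemma e_a2_x3 : (a2 == x3) = false. Proof. exact: (negbTE n_a2_x3). Qed.
Lemma e_a2_a1 : (a2 == a1) = false. Proof. exact: (negbTE n_a2_a1). Qed.
Lemma e_a2_b1 : (a2 == b1) = false. Proof. exact: (negbTE n_a2_b1). Qed.
Lemma e_a2_b2 : (a2 == b2) = false. Proof. exact: (negbTE n_a2_b2). Qed.
Lemma e_a2_a3 : (a2 == a3) = false. Proof. exact: (negbTE n_a2_a3). Qed.
Lemma e_a2_w1 : (a2 == w1) = false. Proof. exact: (negbTE n_a2_w1). Qed.
Lemma e_a2_w2 : (a2 == w2) = false. Proof. exact: (negbTE n_a2_w2). Qed.
Lemma e_a2_w3 : (a2 == w3) = false. Proof. exact: (negbTE n_a2_w3). Qed.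
Lemma e_b1_u : (b1 == u) = false. Proof. exact: (negbTE n_b1_u). Qed.
Lemma e_b1_x1 : (b1 == x1) = false. Proof. exact: (negbTE n_b1_x1). Qed.
Lemma e_b1_x2 : (b1 == x2) = false. Proof. exact: (negbTE n_b1_x2). Qed.
Lemma e_b1_x3 : (b1 == x3) = false. Proof. exact: (negbTE n_b1_x3). Qed.
Lemma e_b1_a1 : (b1 == a1) = false. Proof. exact: (negbTE n_b1_a1). Qed.
Lemma e_b1_a2 : (b1 == a2) = false. Proof. exact: (negbTE n_b1_a2). Qed.
Lemma e_b1_b2 : (b1 == b2) = false. Proof. exact: (negbTE n_b1_b2). Qed.
Lemma e_b1_a3 : (b1 == a3) = false. Proof. exact: (negbTE n_b1_a3). Qed.
Lemma e_b1_w1 : (b1 == w1) = false. Proof. exact: (negbTE n_b1_w1). Qed.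
Lemma e_b1_w2 : (b1 == w2) = false. Proof. exact: (negbTE n_b1_w2). Qed.
Lemma e_b1_w3 : (b1 == w3) = false. Proof. exact: (negbTE n_b1_w3). Qed.
Lemma e_b2_u : (b2 == u) = false. Proof. exact: (negbTE n_b2_u). Qed.
Lemma e_b2_x1 : (b2 == x1) = false. Proof. exact: (negbTE n_b2_x1). Qed.
Lemma e_b2_x2 : (b2 == x2) = false. Proof. exact: (negbTE n_b2_x2). Qed.
Lemma e_b2_x3 : (b2 == x3) = false. Proof. exact: (negbTE n_b2_x3). Qed.
Lemma e_b2_a1 : (b2 == a1) = false. Proof. exact: (negbTE n_b2_a1). Qed.
Lemma e_b2_a2 : (b2 == a2) = false. Proof. exact: (negbTE n_b2_a2). Qed.
Lemma e_b2_b1 : (b2 == b1) = false. Proof. exact: (negbTE n_b2_b1). Qed.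
Lemma e_b2_a3 : (b2 == a3) = false. Proof. exact: (negbTE n_b2_a3). Qed.
Lemma e_b2_w1 : (b2 == w1) = false. Proof. exact: (negbTE n_b2_w1). Qed.
Lemma e_b2_w2 : (b2 == w2) = false. Proof. exact: (negbTE n_b2_w2). Qed.
Lemma e_b2_w3 : (b2 == w3) = false. Proof. exact: (negbTE n_b2_w3). Qed.
Lemma e_a3_u : (a3 == u) = false. Proof. exact: (negbTE n_a3_u). Qed.
Lemma e_a3_x1 : (a3 == x1) = false. Proof. exact: (negbTE n_a3_x1). Qed.
Lemma e_a3_x2 : (a3 == x2) = false. Proof. exact: (negbTE n_a3_x2). Qed.
Lemma e_a3_x3 : (a3 == x3) = false. Proof. exact: (negbTE n_a3_x3). Qed.
Lemma e_a3_a1 : (a3 == a1) = false. Proof. exact: (negbTE n_a3_a1). Qed.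
Lemma e_a3_a2 : (a3 == a2) = false. Proof. exact: (negbTE n_a3_a2). Qed.
Lemma e_a3_b1 : (a3 == b1) = false. Proof. exact: (negbTE n_a3_b1). Qed.
Lemma e_a3_b2 : (a3 == b2) = false. Proof. exact: (negbTE n_a3_b2). Qed.
Lemma e_a3_w1 : (a3 == w1) = false. Proof. exact: (negbTE n_a3_w1). Qed.
Lemma e_a3_w2 : (a3 == w2) = false. Proof. exact: (negbTE n_a3_w2). Qed.
Lemma e_a3_w3 : (a3 == w3) = false. Proof. exact: (negbTE n_a3_w3). Qed.
Lemma e_w1_u : (w1 == u) = false. Proof. exact: (negbTE n_w1_u). Qed.
Lemma e_w1_x1 : (w1 == x1) = false. Proof. exact: (negbTE n_w1_x1). Qed.
Lemma e_w1_x2 : (w1 == x2) = false. Proof. exact: (negbTE n_w1_x2). Qed.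
Lemma e_w1_x3 : (w1 == x3) = false. Proof. exact: (negbTE n_w1_x3). Qed.
Lemma e_w1_a1 : (w1 == a1) = false. Proof. exact: (negbTE n_w1_a1). Qed.
Lemma e_w1_a2 : (w1 == a2) = false. Proof. exact: (negbTE n_w1_a2). Qed.
Lemma e_w1_b1 : (w1 == b1) = false. Proof. exact: (negbTE n_w1_b1). Qed.
Lemma e_w1_b2 : (w1 == b2) = false. Proof. exact: (negbTE n_w1_b2). Qed.
Lemma e_w1_a3 : (w1 == a3) = false. Proof. exact: (negbTE n_w1_a3). Qed.
Lemma e_w2_u : (w2 == u) = false. Proof. exact: (negbTE n_w2_u). Qed.
Lemma e_w2_x1 : (w2 == x1) = false. Proof. exact: (negbTE n_w2_x1). Qed.
Lemma e_w2_x2 : (w2 == x2) = false. Proof. exact: (negbTE n_w2_x2). Qed.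
Lemma e_w2_x3 : (w2 == x3) = false. Proof. exact: (negbTE n_w2_x3). Qed.
Lemma e_w2_a1 : (w2 == a1) = false. Proof. exact: (negbTE n_w2_a1). Qed.
Lemma e_w2_a2 : (w2 == a2) = false. Proof. exact: (negbTE n_w2_a2). Qed.
Lemma e_w2_b1 : (w2 == b1) = false. Proof. exact: (negbTE n_w2_b1). Qed.
Lemma e_w2_b2 : (w2 == b2) = false. Proof. exact: (negbTE n_w2_b2). Qed.
Lemma e_w2_a3 : (w2 == a3) = false. Proof. exact: (negbTE n_w2_a3). Qed.
Lemma e_w3_u : (w3 == u) = false. Proof. exact: (negbTE n_w3_u). Qed.
Lemma e_w3_x1 : (w3 == x1) = false. Proof. exact: (negbTE n_w3_x1). Qed.
Lemma e_w3_x2 : (w3 == x2) = false. Proof. exact: (negbTE n_w3_x2). Qed.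
Lemma e_w3_x3 : (w3 == x3) = false. Proof. exact: (negbTE n_w3_x3). Qed.
Lemma e_w3_a1 : (w3 == a1) = false. Proof. exact: (negbTE n_w3_a1). Qed.
Lemma e_w3_a2 : (w3 == a2) = false. Proof. exact: (negbTE n_w3_a2). Qed.
Lemma e_w3_b1 : (w3 == b1) = false. Proof. exact: (negbTE n_w3_b1). Qed.
Lemma e_w3_b2 : (w3 == b2) = false. Proof. exact: (negbTE n_w3_b2). Qed.
Lemma e_w3_a3 : (w3 == a3) = false. Proof. exact: (negbTE n_w3_a3). Qed.
Definition DistE := (e_u_x1, e_u_x2, e_u_x3, e_u_a1, e_u_a2, e_u_b1, e_u_b2, e_u_a3, e_u_w1, e_u_w2, e_u_w3, e_x1_u, e_x1_x2, e_x1_x3, e_x1_a1, e_x1_a2, e_x1_b1, e_x1_b2, e_x1_a3, e_x1_w1, e_x1_w2, e_x1_w3, e_x2_u, e_x2_x1, e_x2_x3, e_x2_a1, e_x2_a2, e_x2_b1, e_x2_b2, e_x2_a3, e_x2_w1, e_x2_w2, e_x2_w3, e_x3_u, e_x3_x1, e_x3_x2, e_x3_a1, e_x3_a2, e_x3_b1, e_x3_b2, e_x3_a3, e_x3_w1, e_x3_w2, e_x3_w3, e_a1_u, e_a1_x1, e_a1_x2, e_a1_x3, e_a1_a2, e_a1_b1, e_a1_b2, e_a1_a3, e_a1_w1, e_a1_w2, e_a1_w3, e_a2_u, e_a2_x1, e_a2_x2, e_a2_x3, e_a2_a1, e_a2_b1, e_a2_b2, e_a2_a3, e_a2_w1, e_a2_w2,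 e_a2_w3, e_b1_u, e_b1_x1, e_b1_x2, e_b1_x3, e_b1_a1, e_b1_a2, e_b1_b2, e_b1_a3, e_b1_w1, e_b1_w2, e_b1_w3, e_b2_u, e_b2_x1, e_b2_x2, e_b2_x3, e_b2_a1, e_b2_a2, e_b2_b1, e_b2_a3, e_b2_w1, e_b2_w2, e_b2_w3, e_a3_u, e_a3_x1, e_a3_x2, e_a3_x3, e_a3_a1, e_a3_a2, e_a3_b1, e_a3_b2, e_a3_w1, e_a3_w2, e_a3_w3, e_w1_u, e_w1_x1, e_w1_x2, e_w1_x3, e_w1_a1, e_w1_a2, e_w1_b1, e_w1_b2, e_w1_a3, e_w2_u, e_w2_x1, e_w2_x2, e_w2_x3, e_w2_a1, e_w2_a2, e_w2_b1, e_w2_b2, e_w2_a3, e_w3_u, e_w3_x1, e_w3_x2, e_w3_x3, e_w3_a1, e_w3_a2, e_w3_b1, e_w3_b2, e_w3_a3).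

Lemma e0_P1 : e0 b1 w1. Proof. by rewrite /e0 Eb1w1 !IntE. Qed.
Lemma e0_P2 : e0 b2 w2. Proof. by rewrite /e0 Eb2w2 !IntE. Qed.
Lemma e0_P3 : e0 a3 w3. Proof. by rewrite /e0 Ea3w3 !IntE. Qed.
Lemma e0_b1 y : e0 b1 y -> y = w1.
Proof. case/and3P => /Nb1 /orP [/eqP ->|/eqP ->] //; by rewrite !IntE. Qed.
Lemma e0_b2 y : e0 b2 y -> y = w2.
Proof. case/and3P => /Nb2 /orP [/eqP ->|/eqP ->] //; by rewrite !IntE. Qed.
Lemma e0_a3 y : e0 a3 y -> y = w3.
Proof. case/and3P => /Na3 /orP [/eqP ->|/eqP ->] //; by rewrite !IntE. Qed.

Lemma P12 : P1 != P2.
Proof. apply/eqP => E; have : b1 \in P2 by rewrite -E !inE eqxx. by rewrite !inE !(negbTE n_b1_b2) (negbTE n_b1_w2). Qed.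
Lemma P13 : P1 != P3.
Proof. apply/eqP => E; have : b1 \in P3 by rewrite -E !inE eqxx. by rewrite !inE !(negbTE n_b1_a3) (negbTE n_b1_w3). Qed.
Lemma P23 : P2 != P3.
Proof. apply/eqP => E; have : b2 \in P3 by rewrite -E !inE eqxx. by rewrite !inE !(negbTE n_b2_a3) (negbTE n_b2_w3). Qed.

Definition bad1 (c : {set T} -> color) := [&& is1 (c P1), c P1 == c P2, is1 (c P3) & c P3 != c P1].
Definition bad2 (c : {set T} -> color) := [&& is2 (c P3), is2 (c P1) & c P1 != c P3].

Lemma fix_bad c0 : good_coloring e0 c0 -> exists c1, [/\ good_coloring e0 c1, ~~ bad1 c1 & ~~ bad2 c1].
Proof.
move=> g0.
case: (boolP (bad2 c0)) => [B2|nB2].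
  set K := [pred f | connect (R2 e0 c0) P3 f].
  exists (fun f => if f \in K then flip2 (c0 f) else c0 f); split.
  - apply: swap2_good => //; first exact: e0sym.
    move=> u1 u2 v1 v2 g1 g2 i1 i2 cl; rewrite !inE.
    exact: (R2_closed e0sym (c:=c0) P3 g1 g2 i1 i2 cl).
  - rewrite /bad1 /=; have -> : P3 \in K by rewrite inE connect0.
    by case/and3P: B2; rewrite /is2 /is1; case: (c0 P3) => //=; rewrite !andbF.
  - rewrite /bad2 /=; have -> : P3 \in K by rewrite inE connect0.
    have -> : (P1 \in K) = false.
      apply/negP; rewrite inE => /(R2conn e0sym g0) E.
      by case/and3P: B2 => _ _; rewrite E eqxx.
    by case/and3P: B2; rewrite /is2; case: (c0 P3); case: (c0 P1).
case: (boolP (bad1 c0)) => [B1|nB1]; last by exists c0.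
set K := [pred f | connect (R1 e0 c0) P3 f].
have nboth : ~~ ((P1 \in K) && (P2 \in K)).
  apply/negP; rewrite !inE => /andP [H1 H2].
  apply: (three_leaves (R1sym e0 c0) (R1deg2 e0sym g0) _ _ _ _ _ _ H1 H2).
  - exact: (R1leaf e0sym g0 e0_P3 e0_a3).
  - exact: (R1leaf e0sym g0 e0_P1 e0_b1).
  - exact: (R1leaf e0sym g0 e0_P2 e0_b2).
  - by rewrite eq_sym P13.
  - by rewrite eq_sym P23.
  - exact: P12.
exists (fun f => if f \in K then flip1 (c0 f) else c0 f); split.
- apply: swap1_good => //.
  move=> x y z gxy gxz yz i1 i2; rewrite !inE.
  exact: (R1_closed e0irr (c:=c0) P3 gxy gxz yz i1 i2).
- rewrite /bad1 /=; have -> : P3 \in K by rewrite inE connect0.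
  move: nboth; case/and4P: B1; rewrite /is1.
  case: (P1 \in K); case: (P2 \in K) => //=;
  case: (c0 P1); case: (c0 P2); case: (c0 P3) => //=.
- rewrite /bad2 /=; have -> : P3 \in K by rewrite inE connect0.
  case/and4P: B1; rewrite /is1 /is2 => _ _.
  by case: (c0 P3); case: (c0 P1).
Qed.

Lemma Int_cases x : x \in Int -> [\/ x = u, x = x1, x = x2 | [\/ x = x3, x = a1 | x = a2]].
Proof.
move=> H.
case: (eqVneq x u) => [->|n1]; first by constructor 1.
case: (eqVneq x x1) => [->|n2]; first by constructor 2.
case: (eqVneq x x2) => [->|n3]; first by constructor 3.
case: (eqVneq x x3) => [->|n4]; first by constructor 4; constructor 1.
case: (eqVneq x a1) => [->|n5]; first by constructor 4; constructor 2.
case: (eqVneq x a2) => [->|n6]; first by constructor 4; constructor 3.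
by move: H; rewrite !inE (negbTE n1) (negbTE n2) (negbTE n3) (negbTE n4) (negbTE n5) (negbTE n6).
Qed.

Lemma nI_u x : x \notin Int -> (x == u) = false.
Proof. by apply: contraNF => /eqP ->; rewrite IntE. Qed.
Lemma nI_x1 x : x \notin Int -> (x == x1) = false.
Proof. by apply: contraNF => /eqP ->; rewrite IntE. Qed.
Lemma nI_x2 x : x \notin Int -> (x == x2) = false.
Proof. by apply: contraNF => /eqP ->; rewrite IntE. Qed.
Lemma nI_x3 x : x \notin Int -> (x == x3) = false.
Proof. by apply: contraNF => /eqP ->; rewrite IntE. Qed.
Lemma nI_a1 x : x \notin Int -> (x == a1) = false.
Proof. by apply: contraNF => /eqP ->; rewrite IntE. Qed.
Lemma nI_a2 x : x \notin Int -> (x == a2) = false.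
Proof. by apply: contraNF => /eqP ->; rewrite IntE. Qed.

Lemma IntNb y x : e y x -> y \in Int -> x \notin Int ->
  [\/ (y = a1 /\ x = b1), (y = a2 /\ x = b2) | (y = x3 /\ x = a3)].
Proof.
move=> eyx yI nx; case/Int_cases: yI eyx => [->|->|->|[->|->|->]] eyx.
- by case/or3P: (Nu eyx) => /eqP E; move: nx; rewrite E IntE.
- by case/orP: (Nx1 eyx) => /eqP E; move: nx; rewrite E IntE.
- by case/orP: (Nx2 eyx) => /eqP E; move: nx; rewrite E IntE.
- case/orP: (Nx3 eyx) => /eqP E; first by move: nx; rewrite E IntE.
  by constructor 3.
- case/orP: (Na1 eyx) => /eqP E; first by move: nx; rewrite E IntE.
  by constructor 1.
- case/orP: (Na2 eyx) => /eqP E; first by move: nx; rewrite E IntE.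
  by constructor 2.
Qed.

Lemma e0E x y : e x y -> x \notin Int -> y \notin Int -> e0 x y.
Proof. by move=> H nx ny; rewrite /e0 H nx ny. Qed.

Section Glue.
Variable c1 : {set T} -> color.
Hypothesis cg : good_coloring e0 c1.
Variables A1 A2 A3 B1 C1 B2 C2 B3 : color.
Hypothesis iB1 : is1 B1.
Hypothesis iC1 : is1 C1.
Hypothesis iB2 : is1 B2.
Hypothesis iC2 : is1 C2.
Hypothesis iB3 : is1 B3.
Hypothesis hu12 : A1 != A2.
Hypothesis hu13 : A1 != A3.
Hypothesis hu23 : A2 != A3.
Hypothesis hv12 : ~~ (is2 A1 && is2 A2).
Hypothesis hv13 : ~~ (is2 A1 && is2 A3).
Hypothesis hv23 : ~~ (is2 A2 && is2 A3).
Hypothesis hm1 : A1 != B1.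
Hypothesis hm2 : B1 != C1.
Hypothesis hm3 : C1 != c1 [set b1; w1].
Hypothesis hm4 : A2 != B2.
Hypothesis hm5 : B2 != C2.
Hypothesis hm6 : C2 != c1 [set b2; w2].
Hypothesis hm7 : A3 != B3.
Hypothesis hm8 : B3 != c1 [set a3; w3].
Hypothesis h21 : is2 A1 -> (c1 [set b1; w1] != flip2 A1) && (c1 [set a3; w3] != flip2 A1).
Hypothesis h22 : is2 A2 -> (c1 [set b2; w2] != flip2 A2) && (c1 [set a3; w3] != flip2 A2).
Hypothesis h23 : is2 A3 -> is1 (c1 [set a3; w3]) && [forall y, e0 w3 y ==> (c1 [set w3; y] != flip2 A3)].

Definition col (f : {set T}) : color :=
  if f == [set u; x1] then A1 else if f == [set u; x2] then A2 else if f == [set u; x3] then A3 else if f == [set x1; a1] then B1 else if f == [set a1; b1] then C1 else if f == [set x2; a2] then B2 else if f == [set a2; b2] then C2 else if f == [set x3; a3] then B3 else c1 f.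
Lemma col_u_x1 : col [set u; x1] = A1. Proof. by rewrite /col !eqset2 !eqxx ?DistE. Qed.
Lemma col_x1_u : col [set x1; u] = A1. Proof. by rewrite setUC col_u_x1. Qed.
Lemma col_u_x2 : col [set u; x2] = A2. Proof. by rewrite /col !eqset2 !eqxx ?DistE. Qed.
Lemma col_x2_u : col [set x2; u] = A2. Proof. by rewrite setUC col_u_x2. Qed.
Lemma col_u_x3 : col [set u; x3] = A3. Proof. by rewrite /col !eqset2 !eqxx ?DistE. Qed.
Lemma col_x3_u : col [set x3; u] = A3. Proof. by rewrite setUC col_u_x3. Qed.
Lemma col_x1_a1 : col [set x1; a1] = B1. Proof. by rewrite /col !eqset2 !eqxx ?DistE. Qed.
Lemma col_a1_x1 : col [set a1; x1] = B1. Proof. by rewrite setUC col_x1_a1. Qed.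
Lemma col_a1_b1 : col [set a1; b1] = C1. Proof. by rewrite /col !eqset2 !eqxx ?DistE. Qed.
Lemma col_b1_a1 : col [set b1; a1] = C1. Proof. by rewrite setUC col_a1_b1. Qed.
Lemma col_x2_a2 : col [set x2; a2] = B2. Proof. by rewrite /col !eqset2 !eqxx ?DistE. Qed.
Lemma col_a2_x2 : col [set a2; x2] = B2. Proof. by rewrite setUC col_x2_a2. Qed.
Lemma col_a2_b2 : col [set a2; b2] = C2. Proof. by rewrite /col !eqset2 !eqxx ?DistE. Qed.
Lemma col_b2_a2 : col [set b2; a2] = C2. Proof. by rewrite setUC col_a2_b2. Qed.
Lemma col_x3_a3 : col [set x3; a3] = B3. Proof. by rewrite /col !eqset2 !eqxx ?DistE. Qed.
Lemma col_a3_x3 : col [set a3; x3] = B3. Proof. by rewrite setUC col_x3_a3. Qed.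
Definition ColE := (col_u_x1, col_x1_u, col_u_x2, col_x2_u, col_u_x3, col_x3_u, col_x1_a1, col_a1_x1, col_a1_b1, col_b1_a1, col_x2_a2, col_a2_x2, col_a2_b2, col_b2_a2, col_x3_a3, col_a3_x3).
Lemma col_out x y : x \notin Int -> y \notin Int -> col [set x; y] = c1 [set x; y].
Proof. move=> nx ny; rewrite /col !eqset2 ?(nI_u nx) ?(nI_u ny) ?(nI_x1 nx) ?(nI_x1 ny) ?(nI_x2 nx) ?(nI_x2 ny) ?(nI_x3 nx) ?(nI_x3 ny) ?(nI_a1 nx) ?(nI_a1 ny) ?(nI_a2 nx) ?(nI_a2 ny) ?andbF ?andFb //=. Qed.


Ltac clash_with E :=
  first [ by move: hu12; rewrite E eqxx /= | by move: hu12; rewrite -E eqxx /=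
        | by move: hu13; rewrite E eqxx /= | by move: hu13; rewrite -E eqxx /=
        | by move: hu23; rewrite E eqxx /= | by move: hu23; rewrite -E eqxx /=
        | by move: hm1; rewrite E eqxx /= | by move: hm1; rewrite -E eqxx /=
        | by move: hm2; rewrite E eqxx /= | by move: hm2; rewrite -E eqxx /=
        | by move: hm3; rewrite E eqxx /= | by move: hm3; rewrite -E eqxx /=
        | by move: hm4; rewrite E eqxx /= | by move: hm4; rewrite -E eqxx /=
        | by move: hm5; rewrite E eqxx /= | by move: hm5; rewrite -E eqxx /=
        | by move: hm6; rewrite E eqxx /= | by move: hm6; rewrite -E eqxx /=
        | by move: hm7; rewrite E eqxx /= | by move: hm7; rewrite -E eqxx /=
        | by move: hm8; rewrite E eqxx /= | by move: hm8; rewrite -E eqxx /= ].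

Ltac fin2 H1 H2 := let E := fresh "E" in have E := etrans H1 (Logic.eq_sym H2); clash_with E.

Lemma esymm x y : e x y -> e y x. Proof. by rewrite esym. Qed.

Lemma glue_match k : (k = C1a \/ k = C1b) -> is_matching_col e col k.
Proof.
move=> hk.
have m0 : is_matching_col e0 c1 k by case: cg => [[? ? _ _] _ _]; case: hk => ->.
move=> x y z exy exz yz H1 H2.
case: (boolP (x \in Int)) => xI.
  case/Int_cases: xI exy exz yz H1 H2 => [->|->|->|[->|->|->]] exy exz yz H1 H2.
  - case/or3P: (Nu exy) => /eqP Ey; case/or3P: (Nu exz) => /eqP Ez; subst y z;
      rewrite ?ColE in H1 H2; first [by rewrite eqxx in yz | fin2 H1 H2].
  - case/orP: (Nx1 exy) => /eqP Ey; case/orP: (Nx1 exz) => /eqP Ez; subst y z;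
      rewrite ?ColE in H1 H2; first [by rewrite eqxx in yz | fin2 H1 H2].
  - case/orP: (Nx2 exy) => /eqP Ey; case/orP: (Nx2 exz) => /eqP Ez; subst y z;
      rewrite ?ColE in H1 H2; first [by rewrite eqxx in yz | fin2 H1 H2].
  - case/orP: (Nx3 exy) => /eqP Ey; case/orP: (Nx3 exz) => /eqP Ez; subst y z;
      rewrite ?ColE in H1 H2; first [by rewrite eqxx in yz | fin2 H1 H2].
  - case/orP: (Na1 exy) => /eqP Ey; case/orP: (Na1 exz) => /eqP Ez; subst y z;
      rewrite ?ColE in H1 H2; first [by rewrite eqxx in yz | fin2 H1 H2].
  - case/orP: (Na2 exy) => /eqP Ey; case/orP: (Na2 exz) => /eqP Ez; subst y z;
      rewrite ?ColE in H1 H2; first [by rewrite eqxx in yz | fin2 H1 H2].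
have side : forall y z, e x y -> e x z -> y != z -> y \in Int -> col [set x; y] = k -> col [set x; z] = k -> False.
  move=> y' z' exy' exz' yz' yI H1' H2'.
  case: (IntNb (esymm exy') yI xI) => [[Ey Ex]|[Ey Ex]|[Ey Ex]]; subst x y'.
  - case/orP: (Nb1 exz') => /eqP Ez; subst z'; first by rewrite eqxx in yz'.
    rewrite ColE col_out ?IntE // in H1' H2'; fin2 H1' H2'.
  - case/orP: (Nb2 exz') => /eqP Ez; subst z'; first by rewrite eqxx in yz'.
    rewrite ColE col_out ?IntE // in H1' H2'; fin2 H1' H2'.
  - case/orP: (Na3 exz') => /eqP Ez; subst z'; first by rewrite eqxx in yz'.
    rewrite ColE col_out ?IntE // in H1' H2'; fin2 H1' H2'.
case: (boolP (y \in Int)) => yI; first exact: (side y z exy exz yz yI H1 H2).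
case: (boolP (z \in Int)) => zI; first by apply: (side z y exz exy _ zI H2 H1); rewrite eq_sym.
rewrite !col_out // in H1 H2.
exact: (m0 x y z (e0E exy xI yI) (e0E exz xI zI) yz H1 H2).
Qed.

Lemma not12 k : is1 k -> is2 k -> False. Proof. by case: k. Qed.

Ltac kill1 H := exfalso; first [ exact: (not12 iB1 H) | exact: (not12 iC1 H) | exact: (not12 iB2 H)
                      | exact: (not12 iC2 H) | exact: (not12 iB3 H) ].

Definition ed (x y p q : T) := (x == p) && (y == q) || (x == q) && (y == p).

Lemma col2_Int x y : e x y -> is2 (col [set x; y]) -> (x \in Int) || (y \in Int) ->
  [\/ [set x; y] = [set u; x1] /\ ed x y u x1,
      [set x; y] = [set u; x2] /\ ed x y u x2
    | [set x; y] = [set u; x3] /\ ed x y u x3].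
Proof.
move=> exy H2 xyI.
have sw : forall p q : T, [set q; p] = [set p; q] by move=> p q; rewrite setUC.
case: (boolP (x \in Int)) => xI.
  case/Int_cases: xI exy H2 => [->|->|->|[->|->|->]] exy H2.
  - case/or3P: (Nu exy) => /eqP ->; [constructor 1|constructor 2|constructor 3];
      by rewrite /ed !eqxx.
  - case/orP: (Nx1 exy) => /eqP Ey; subst y; rewrite ?ColE in H2; last by kill1 H2.
    by constructor 1; rewrite sw /ed !eqxx orbT.
  - case/orP: (Nx2 exy) => /eqP Ey; subst y; rewrite ?ColE in H2; last by kill1 H2.
    by constructor 2; rewrite sw /ed !eqxx orbT.
  - case/orP: (Nx3 exy) => /eqP Ey; subst y; rewrite ?ColE in H2; last by kill1 H2.
    by constructor 3; rewrite sw /ed !eqxx orbT.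
  - by case/orP: (Na1 exy) => /eqP Ey; subst y; rewrite ?ColE in H2; kill1 H2.
  - by case/orP: (Na2 exy) => /eqP Ey; subst y; rewrite ?ColE in H2; kill1 H2.
rewrite (negbTE xI) /= in xyI.
by move: H2; case: (IntNb (esymm exy) xyI xI) => [[-> ->]|[-> ->]|[-> ->]] H2; rewrite ColE in H2; kill1 H2.
Qed.


Lemma ed_Int x y i : i \in [:: x1; x2; x3] -> ed x y u i -> x \in Int.
Proof.
rewrite !inE /ed => /or3P [] /eqP -> /orP [] /andP [/eqP -> _]; by rewrite eqxx ?orbT.
Qed.

Lemma glue_ind k : (k = C2a \/ k = C2b) -> is_induced_matching_col e col k.
Proof.
move=> hk.
have i0 : is_induced_matching_col e0 c1 k by case: cg => [[_ _ ? ?] _ _]; case: hk => ->.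
have k2 : is2 k by case: hk => ->.
move=> u1 u2 v1 v2 eu ev ne H1 H2.
have sideP : forall p1 p2 q1 q2, e p1 p2 -> e q1 q2 -> col [set p1; p2] = k -> col [set q1; q2] = k ->
    (p1 \in Int) || (p2 \in Int) -> q1 \notin Int -> q2 \notin Int -> p1 \in Int -> e p1 q1 -> False.
  move=> p1 p2 q1 q2 ep eq Hp Hq pI nq1 nq2 p1I epq.
  have F := col2_Int ep (etrans (f_equal is2 Hp) k2) pI.
  case: (IntNb epq p1I nq1) => [[E1 E2]|[E1 E2]|[E1 E2]]; subst p1 q1.
  - by case: F => [[_ F]|[_ F]|[_ F]]; move: F; rewrite /ed ?DistE.
  - by case: F => [[_ F]|[_ F]|[_ F]]; move: F; rewrite /ed ?DistE.
  case: F => [[_ F]|[_ F]|[Ef F]]; move: F; rewrite /ed ?DistE //= => /andP [_ /eqP Ep2].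
  subst p2; have Eq2 := e0_a3 (e0E eq nq1 nq2); subst q2.
  rewrite ColE in Hp; rewrite col_out ?IntE // in Hq.
  have := h23; rewrite Hp k2 => /(_ erefl) /andP [i3 _].
  by rewrite Hq in i3; exact: (not12 i3 k2).
case: (boolP ((u1 \in Int) || (u2 \in Int))) => fI.
  have F := col2_Int eu (etrans (f_equal is2 H1) k2) fI.
  have u1I : u1 \in Int by case: F => [[_ F]|[_ F]|[_ F]]; apply: (ed_Int _ F); rewrite !inE eqxx ?orbT.
  case: (boolP ((v1 \in Int) || (v2 \in Int))) => gI.
    have G := col2_Int ev (etrans (f_equal is2 H2) k2) gI.
    exfalso.
    case: F => [[Ef _]|[Ef _]|[Ef _]]; case: G => [[Eg _]|[Eg _]|[Eg _]]; rewrite Ef Eg in ne H1 H2;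
      rewrite ?ColE in H1 H2; first [by rewrite eqxx in ne | fin2 H1 H2].
  move: gI; rewrite negb_or => /andP [v1I v2I].
  split; first by apply/eqP => E; subst; rewrite u1I in v1I.
  by apply/negP => euv; apply: (sideP _ _ _ _ eu ev H1 H2 fI v1I v2I u1I euv).
move: fI; rewrite negb_or => /andP [u1I u2I].
case: (boolP ((v1 \in Int) || (v2 \in Int))) => gI.
  have G := col2_Int ev (etrans (f_equal is2 H2) k2) gI.
  have v1I : v1 \in Int by case: G => [[_ G]|[_ G]|[_ G]]; apply: (ed_Int _ G); rewrite !inE eqxx ?orbT.
  split; first by apply/eqP => E; subst; rewrite v1I in u1I.
  by apply/negP => euv; apply: (sideP _ _ _ _ ev eu H2 H1 gI u1I u2I v1I (esymm euv)).
move: gI; rewrite negb_or => /andP [v1I v2I].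
rewrite !col_out // in H1 H2.
have [n1 n2] := i0 _ _ _ _ (e0E eu u1I u2I) (e0E ev v1I v2I) ne H1 H2.
split=> //; apply: contra n2 => euv; exact: e0E.
Qed.


Lemma flip2_2 z : is2 z -> is2 (flip2 z). Proof. by case: z. Qed.

Lemma near (p1 p2 q1 q2 w : T) z : e p1 p2 -> e q1 q2 -> (p1 \in Int) || (p2 \in Int) ->
  col [set p1; p2] = z -> is2 z -> q1 \notin Int -> q2 \notin Int ->
  c1 [set q1; q2] = flip2 z -> e p1 w -> e w q1 -> False.
Proof.
move=> ep eq pI Hp z2 nq1 nq2 Hq e1 e2.
have F := col2_Int ep (etrans (f_equal is2 Hp) z2) pI.
have atu : forall i, i \in [:: x1; x2; x3] -> p1 = u -> False.
  move=> i _ Ep1; subst p1.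
  case/or3P: (Nu e1) => /eqP Ew; subst w.
  - by case: (IntNb e2 inI_x1 nq1) => [[E _]|[E _]|[E _]]; move: E; apply/eqP; rewrite DistE.
  - by case: (IntNb e2 inI_x2 nq1) => [[E _]|[E _]|[E _]]; move: E; apply/eqP; rewrite DistE.
  case: (IntNb e2 inI_x3 nq1) => [[E _]|[E _]|[_ E]]; try by move: E; apply/eqP; rewrite DistE.
  subst q1; have Eq2 := e0_a3 (e0E eq nq1 nq2); subst q2.
  case: F => [[Ef _]|[Ef _]|[Ef _]]; rewrite Ef ColE in Hp; subst z.
  - by case/andP: (h21 z2) => _; rewrite Hq eqxx.
  - by case/andP: (h22 z2) => _; rewrite Hq eqxx.
  - by case/andP: (h23 z2) => i3 _; rewrite Hq in i3; exact: (not12 i3 (flip2_2 z2)).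
case: F => [[Ef F]|[Ef F]|[Ef F]]; move: F; rewrite /ed => /orP [] /andP [/eqP Ep1 /eqP Ep2];
  try (by apply: (atu x1); rewrite ?inE ?eqxx);
  try (by apply: (atu x2); rewrite ?inE ?eqxx ?orbT);
  try (by apply: (atu x3); rewrite ?inE ?eqxx ?orbT); subst p1 p2; rewrite ColE in Hp; subst z.
- case/orP: (Nx1 e1) => /eqP Ew; subst w.
    by case: (IntNb e2 inI_u nq1) => [[E _]|[E _]|[E _]]; move: E; apply/eqP; rewrite DistE.
  case: (IntNb e2 inI_a1 nq1) => [[_ E]|[E _]|[E _]]; try by move: E; apply/eqP; rewrite DistE.
  subst q1; have Eq2 := e0_b1 (e0E eq nq1 nq2); subst q2.
  by case/andP: (h21 z2); rewrite Hq eqxx.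
- case/orP: (Nx2 e1) => /eqP Ew; subst w.
    by case: (IntNb e2 inI_u nq1) => [[E _]|[E _]|[E _]]; move: E; apply/eqP; rewrite DistE.
  case: (IntNb e2 inI_a2 nq1) => [[E _]|[_ E]|[E _]]; try by move: E; apply/eqP; rewrite DistE.
  subst q1; have Eq2 := e0_b2 (e0E eq nq1 nq2); subst q2.
  by case/andP: (h22 z2); rewrite Hq eqxx.
- case/orP: (Nx3 e1) => /eqP Ew; subst w.
    by case: (IntNb e2 inI_u nq1) => [[E _]|[E _]|[E _]]; move: E; apply/eqP; rewrite DistE.
  case/orP: (Na3 e2) => /eqP Eq1; subst q1; first by rewrite IntE in nq1.
  case/andP: (h23 z2) => _ /forallP /(_ q2) /implyP H.
  by move: (H (e0E eq nq1 nq2)); rewrite Hq eqxx.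
Qed.


Ltac fin3 H1 H2 :=
  first [ by rewrite H1 in H2
        | by move: hv12; rewrite H1 H2 | by move: hv12; rewrite H2 H1
        | by move: hv13; rewrite H1 H2 | by move: hv13; rewrite H2 H1
        | by move: hv23; rewrite H1 H2 | by move: hv23; rewrite H2 H1
        | by move: iB1; rewrite H1 | by move: iB1; rewrite H2
        | by move: iC1; rewrite H1 | by move: iC1; rewrite H2
        | by move: iB2; rewrite H1 | by move: iB2; rewrite H2
        | by move: iC2; rewrite H1 | by move: iC2; rewrite H2
        | by move: iB3; rewrite H1 | by move: iB3; rewrite H2 ].

Lemma glue_I x y z : e x y -> e x z -> col [set x; y] = C2a -> col [set x; z] <> C2b.
Proof.
move=> exy exz H1 H2.
case: (boolP (x \in Int)) => xI.
  case/Int_cases: xI exy exz H1 H2 => [->|->|->|[->|->|->]] exy exz H1 H2.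
  - case/or3P: (Nu exy) => /eqP Ey; case/or3P: (Nu exz) => /eqP Ez; subst y z;
      rewrite ?ColE in H1 H2; fin3 H1 H2.
  - case/orP: (Nx1 exy) => /eqP Ey; case/orP: (Nx1 exz) => /eqP Ez; subst y z;
      rewrite ?ColE in H1 H2; fin3 H1 H2.
  - case/orP: (Nx2 exy) => /eqP Ey; case/orP: (Nx2 exz) => /eqP Ez; subst y z;
      rewrite ?ColE in H1 H2; fin3 H1 H2.
  - case/orP: (Nx3 exy) => /eqP Ey; case/orP: (Nx3 exz) => /eqP Ez; subst y z;
      rewrite ?ColE in H1 H2; fin3 H1 H2.
  - case/orP: (Na1 exy) => /eqP Ey; case/orP: (Na1 exz) => /eqP Ez; subst y z;
      rewrite ?ColE in H1 H2; fin3 H1 H2.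
  - case/orP: (Na2 exy) => /eqP Ey; case/orP: (Na2 exz) => /eqP Ez; subst y z;
      rewrite ?ColE in H1 H2; fin3 H1 H2.
case: (boolP (y \in Int)) => yI.
  by move: H1; case: (IntNb (esymm exy) yI xI) => [[-> ->]|[-> ->]|[-> ->]]; rewrite ColE => H1;
    fin3 H1 H2.
case: (boolP (z \in Int)) => zI.
  by move: H2; case: (IntNb (esymm exz) zI xI) => [[-> ->]|[-> ->]|[-> ->]]; rewrite ColE => H2;
    fin3 H1 H2.
rewrite !col_out // in H1 H2.
by case: cg => _ hI _; apply: (hI x y z (e0E exy xI yI) (e0E exz xI zI) H1 H2).
Qed.

Lemma glue_II u1 u2 v1 v2 w : e u1 u2 -> e v1 v2 -> col [set u1; u2] = C2a -> col [set v1; v2] = C2b ->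
  u1 != v1 -> u1 != v2 -> u2 != v1 -> u2 != v2 -> ~ (e u1 w /\ e w v1).
Proof.
move=> eu ev H1 H2 n11 n12 n21 n22 [e1 e2].
case: (boolP ((u1 \in Int) || (u2 \in Int))) => fI;
case: (boolP ((v1 \in Int) || (v2 \in Int))) => gI.
- have F := col2_Int eu (etrans (f_equal is2 H1) erefl) fI.
  have G := col2_Int ev (etrans (f_equal is2 H2) erefl) gI.
  by case: F => [[Ef _]|[Ef _]|[Ef _]]; case: G => [[Eg _]|[Eg _]|[Eg _]]; rewrite Ef ?ColE in H1;
    rewrite Eg ?ColE in H2; fin3 H1 H2.
- move: gI; rewrite negb_or => /andP [v1I v2I].
  rewrite col_out // in H2.
  exact: (near eu ev fI H1 erefl v1I v2I H2 e1 e2).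
- move: fI; rewrite negb_or => /andP [u1I u2I].
  rewrite col_out // in H1.
  exact: (near ev eu gI H2 erefl u1I u2I H1 (esymm e2) (esymm e1)).
move: fI gI; rewrite !negb_or => /andP [u1I u2I] /andP [v1I v2I].
rewrite !col_out // in H1 H2.
case: (boolP (w \in Int)) => wI.
  case: (IntNb (esymm e1) wI u1I) => [[E1 E2]|[E1 E2]|[E1 E2]];
  case: (IntNb e2 wI v1I) => [[E3 E4]|[E3 E4]|[E3 E4]]; subst;
    first [ by rewrite eqxx in n11 | by move: E3; apply/eqP; rewrite DistE ].
case: cg => _ _ hII.
by apply: (hII u1 u2 v1 v2 w (e0E eu u1I u2I) (e0E ev v1I v2I) H1 H2 n11 n12 n21 n22); split;
  apply: e0E.
Qed.

Lemma glue_good : good_coloring e col.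
Proof.
split; first split.
- by apply: glue_match; left.
- by apply: glue_match; right.
- by apply: glue_ind; left.
- by apply: glue_ind; right.
- exact: glue_I.
- exact: glue_II.
Qed.

End Glue.

Definition notc (p : color) := if p == C1a then C1b else C1a.

Lemma extend c1 : good_coloring e0 c1 -> ~~ bad1 c1 -> ~~ bad2 c1 -> has_good_coloring e.
Proof.
move=> cg nb1 nb2.
rewrite /bad1 /bad2 /P1 /P2 /P3 in nb1 nb2.
case: (boolP (is2 (c1 [set a3; w3]))) => i3.
  pose p1 := c1 [set b1; w1]; pose p2 := c1 [set b2; w2]; pose p3 := c1 [set a3; w3].
  exists (col c1 p3 (notc p2) (notc (notc p2)) (notc (notc p1)) (notc p1)
              (notc (notc p2)) (notc (notc (notc p2))) (notc (notc (notc p2)))).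
  apply: glue_good => //; rewrite /p1 /p2 /p3;
  move: nb1 nb2 i3; rewrite /notc /is1 /is2 /flip2;
  case: (c1 [set b1; w1]); case: (c1 [set b2; w2]); case: (c1 [set a3; w3]) => //=.
have i3' : is1 (c1 [set a3; w3]) by move: i3; rewrite /is1 /is2; case: (c1 [set a3; w3]).
case: (boolP ((c1 [set b1; w1] == c1 [set b2; w2]) && is1 (c1 [set b1; w1]))) => eq12.
  pose p1 := c1 [set b1; w1]; pose p2 := c1 [set b2; w2]; pose p3 := c1 [set a3; w3].
  exists (col c1 C2a (notc p2) p3 (notc (notc p1)) (notc p1)
              (notc (notc p2)) (notc (notc (notc p2))) (notc p3)).
  apply: glue_good => //; rewrite /p1 /p2 /p3;
  move: nb1 nb2 i3 eq12; rewrite /notc /is1 /is2 /flip2;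
  case: (c1 [set b1; w1]); case: (c1 [set b2; w2]); case: (c1 [set a3; w3]) => //=.
pose z := if [exists y, e0 w3 y && (c1 [set w3; y] == C2a)] then C2a else C2b.
have Hz : [forall y, e0 w3 y ==> (c1 [set w3; y] != flip2 z)].
  rewrite /z; case: (boolP [exists y, _]) => [/existsP [y0 /andP [ey0 /eqP c0]]|nex].
    apply/forallP => y; apply/implyP => ey; apply/eqP => cy.
    by case: cg => _ hI _; apply: (hI w3 y0 y ey0 ey c0 cy).
  apply/forallP => y; apply/implyP => ey; apply/negP => /eqP cy.
  by move/existsP: nex; apply; exists y; rewrite ey cy.
have z2 : is2 z by rewrite /z; case: ifP.
pose p1 := c1 [set b1; w1]; pose p2 := c1 [set b2; w2]; pose p3 := c1 [set a3; w3].
pose A1 := if is1 p1 then notc p1 else notc (notc p2).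
pose A2 := if is1 p1 then notc (notc p1) else notc p2.
exists (col c1 A1 A2 z (notc A1) (notc (notc A1)) (notc A2) (notc (notc A2)) (notc p3)).
apply: glue_good => //;
  try (by move=> _; apply/andP; split; [exact: i3' | exact: Hz]);
  clear Hz; clearbody z; rewrite /A1 /A2 /p1 /p2 /p3;
  move: nb1 nb2 i3 i3' eq12 z2; rewrite /notc /is1 /is2 /flip2;
  case: z; case: (c1 [set b1; w1]); case: (c1 [set b2; w2]); case: (c1 [set a3; w3]) => //=.
Qed.

Lemma final_step :
  (simple_graph e0 -> subcubic e0 -> (mad e0 < 20%:R / 9%:R)%R ->
     (#|T| + #|edges e0| < #|T| + #|edges e|)%N -> has_good_coloring e0) ->
  subcubic e -> (mad e < 20%:R / 9%:R)%R -> has_good_coloring e.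
Proof.
move=> mini sc md.
have [c0 g0] : has_good_coloring e0.
  apply: mini.
  - exact: simple_e0.
  - by move=> x; apply: leq_trans (deg_e0 x) (sc x).
  - exact: le_lt_trans mad_e0 md.
  - by rewrite ltn_add2l size_e0.
have [c1 [g1 n1 n2]] := fix_bad g0.
exact: (extend g1 n1 n2).
Qed.
End Main.

Unset Implicit Arguments. Set Strict Implicit.

Lemma deg2_nb (T : finType) (e : rel T) v a b : deg e v = 2 -> e v a -> e v b -> a != b ->
  forall y, e v y -> (y == a) || (y == b).
Proof.
move=> d va vb ab y vy.
have S : [set a; b] \subset [set y | e v y].
  by apply/subsetP => z; rewrite !inE => /orP [] /eqP ->.
have C : #|[set a; b]| = #|[set y | e v y]| by rewrite cards2 ab -d.
have := (subset_cardP C S) y; rewrite !inE vy => ->.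
by [].
Qed.

Lemma deg3_nb (T : finType) (e : rel T) v a b c : deg e v = 3 -> e v a -> e v b -> e v c ->
  a != b -> a != c -> b != c -> forall y, e v y -> [|| y == a, y == b | y == c].
Proof.
move=> d va vb vc ab ac bc y vy.
have S : [set a; b; c] \subset [set y | e v y].
  by apply/subsetP => z; rewrite !inE => /orP [/orP [] |] /eqP ->.
have C : #|[set a; b; c]| = #|[set y | e v y]|.
  by rewrite /deg in d; rewrite d -setUA cardsU1 cards2 !inE negb_or ab ac bc.
have := (subset_cardP C S) y; rewrite !inE vy => H.
by rewrite orbA H.
Qed.

Lemma degne (T : finType) (e : rel T) a b : deg e a = 2 -> deg e b = 3 -> a != b.
Proof. by move=> da db; apply/eqP => E; move: da; rewrite E db. Qed.

Theorem lemma8 (T : finType) (e : rel T) :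
  simple_graph e -> subcubic e -> (mad e < 20%:R / 9%:R)%R ->
  ~ has_good_coloring e ->
  (forall (T' : finType) (e' : rel T'),
     simple_graph e' -> subcubic e' -> (mad e' < 20%:R / 9%:R)%R ->
     #|T'| + #|edges e'| < #|T| + #|edges e| ->
     has_good_coloring e') ->
  forall u : T, deg e u = 3 ->
  forall x1 x2 : T, x1 != x2 ->
  adj_thread e u 3 x1 -> adj_thread e u 3 x2 ->
  ~ (exists x3 : T, [/\ x3 != x1, x3 != x2 & adj_thread e u 2 x3]).
Proof.
move=> [esym eirr] sc md ng mini u du x1 x2 n12 T1 T2 [x3 [n31 n32 T3]].
case: T1 => p [w1 [sz1 hx1 pa1 un1 [al1 dw1]]].
case: p sz1 hx1 pa1 un1 al1 => [|y1 [|a1 [|b1 [|? ?]]]] //= _ hx1 pa1 un1 al1; subst y1.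
case: T2 => p [w2 [sz2 hx2 pa2 un2 [al2 dw2]]].
case: p sz2 hx2 pa2 un2 al2 => [|y2 [|a2 [|b2 [|? ?]]]] //= _ hx2 pa2 un2 al2; subst y2.
case: T3 => p [w3 [sz3 hx3 pa3 un3 [al3 dw3]]].
case: p sz3 hx3 pa3 un3 al3 => [|y3 [|a3 [|? ?]]] //= _ hx3 pa3 un3 al3; subst y3.
case/and4P: al1 => /eqP dx1 /eqP da1 /eqP db1 _.
case/and4P: al2 => /eqP dx2 /eqP da2 /eqP db2 _.
case/and3P: al3 => /eqP dx3 /eqP da3 _.
case/and5P: pa1 => Eux1 Ex1a1 Ea1b1 Eb1w1 _.
case/and5P: pa2 => Eux2 Ex2a2 Ea2b2 Eb2w2 _.
case/and4P: pa3 => Eux3 Ex3a3 Ea3w3 _.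
move: un1 un2 un3; rewrite !inE !negb_or.
move=> /and5P [/and4P [n_u_x1 n_u_a1 n_u_b1 n_u_w1] /and3P [n_x1_a1 n_x1_b1 n_x1_w1] /andP [n_a1_b1 n_a1_w1] n_b1_w1 _].
move=> /and5P [/and4P [n_u_x2 n_u_a2 n_u_b2 n_u_w2] /and3P [n_x2_a2 n_x2_b2 n_x2_w2] /andP [n_a2_b2 n_a2_w2] n_b2_w2 _].
move=> /and4P [/and3P [n_u_x3 n_u_a3 n_u_w3] /andP [n_x3_a3 n_x3_w3] n_a3_w3 _].
have n_x2_w1 : x2 != w1 := @degne _ _ _ _ dx2 dw1.
have n_a2_w1 : a2 != w1 := @degne _ _ _ _ da2 dw1.
have n_b2_w1 : b2 != w1 := @degne _ _ _ _ db2 dw1.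
have n_x3_w1 : x3 != w1 := @degne _ _ _ _ dx3 dw1.
have n_a3_w1 : a3 != w1 := @degne _ _ _ _ da3 dw1.
have n_x1_w2 : x1 != w2 := @degne _ _ _ _ dx1 dw2.
have n_a1_w2 : a1 != w2 := @degne _ _ _ _ da1 dw2.
have n_b1_w2 : b1 != w2 := @degne _ _ _ _ db1 dw2.
have n_x3_w2 : x3 != w2 := @degne _ _ _ _ dx3 dw2.
have n_a3_w2 : a3 != w2 := @degne _ _ _ _ da3 dw2.
have n_x1_w3 : x1 != w3 := @degne _ _ _ _ dx1 dw3.
have n_a1_w3 : a1 != w3 := @degne _ _ _ _ da1 dw3.
have n_b1_w3 : b1 != w3 := @degne _ _ _ _ db1 dw3.
have n_x2_w3 : x2 != w3 := @degne _ _ _ _ dx2 dw3.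
have n_a2_w3 : a2 != w3 := @degne _ _ _ _ da2 dw3.
have n_b2_w3 : b2 != w3 := @degne _ _ _ _ db2 dw3.
have n13 : x1 != x3 by rewrite eq_sym.
have n23 : x2 != x3 by rewrite eq_sym.
have sy : forall a b, e a b -> e b a by move=> a b; rewrite esym.
have Nu := @deg3_nb _ _ _ _ _ _ du Eux1 Eux2 Eux3 n12 n13 n23.
have Nx1 := @deg2_nb _ _ _ _ _ dx1 (sy _ _ Eux1) Ex1a1 n_u_a1.
have Na1 := @deg2_nb _ _ _ _ _ da1 (sy _ _ Ex1a1) Ea1b1 n_x1_b1.
have Nb1 := @deg2_nb _ _ _ _ _ db1 (sy _ _ Ea1b1) Eb1w1 n_a1_w1.
have Nx2 := @deg2_nb _ _ _ _ _ dx2 (sy _ _ Eux2) Ex2a2 n_u_a2.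
have Na2 := @deg2_nb _ _ _ _ _ da2 (sy _ _ Ex2a2) Ea2b2 n_x2_b2.
have Nb2 := @deg2_nb _ _ _ _ _ db2 (sy _ _ Ea2b2) Eb2w2 n_a2_w2.
have Nx3 := @deg2_nb _ _ _ _ _ dx3 (sy _ _ Eux3) Ex3a3 n_u_a3.
have Na3 := @deg2_nb _ _ _ _ _ da3 (sy _ _ Ex3a3) Ea3w3 n_x3_w3.
have n_x1_a2 : x1 != a2.
  apply/eqP => E; have Hed : e a2 u by rewrite esym -E.
  have := Na2 u Hed.
  by case/orP => /eqP E'; subst; match goal with H : is_true (?a != ?a) |- _ => by rewrite eqxx in H end.
have n_x1_b2 : x1 != b2.
  apply/eqP => E; have Hed : e b2 u by rewrite esym -E.
  have := Nb2 u Hed.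
  by case/orP => /eqP E'; subst; match goal with H : is_true (?a != ?a) |- _ => by rewrite eqxx in H end.
have n_x2_a1 : x2 != a1.
  apply/eqP => E; have Hed : e a1 u by rewrite esym -E.
  have := Na1 u Hed.
  by case/orP => /eqP E'; subst; match goal with H : is_true (?a != ?a) |- _ => by rewrite eqxx in H end.
have n_x2_b1 : x2 != b1.
  apply/eqP => E; have Hed : e b1 u by rewrite esym -E.
  have := Nb1 u Hed.
  by case/orP => /eqP E'; subst; match goal with H : is_true (?a != ?a) |- _ => by rewrite eqxx in H end.
have n_x1_a3 : x1 != a3.
  apply/eqP => E; have Hed : e a3 u by rewrite esym -E.
  have := Na3 u Hed.
  by case/orP => /eqP E'; subst; match goal with H : is_true (?a != ?a) |- _ => by rewrite eqxx in H end.
have n_x3_a1 : x3 != a1.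
  apply/eqP => E; have Hed : e a1 u by rewrite esym -E.
  have := Na1 u Hed.
  by case/orP => /eqP E'; subst; match goal with H : is_true (?a != ?a) |- _ => by rewrite eqxx in H end.
have n_x3_b1 : x3 != b1.
  apply/eqP => E; have Hed : e b1 u by rewrite esym -E.
  have := Nb1 u Hed.
  by case/orP => /eqP E'; subst; match goal with H : is_true (?a != ?a) |- _ => by rewrite eqxx in H end.
have n_x2_a3 : x2 != a3.
  apply/eqP => E; have Hed : e a3 u by rewrite esym -E.
  have := Na3 u Hed.
  by case/orP => /eqP E'; subst; match goal with H : is_true (?a != ?a) |- _ => by rewrite eqxx in H end.
have n_x3_a2 : x3 != a2.
  apply/eqP => E; have Hed : e a2 u by rewrite esym -E.
  have := Na2 u Hed.
  by case/orP => /eqP E'; subst; match goal with H : is_true (?a != ?a) |- _ => by rewrite eqxx in H end.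
have n_x3_b2 : x3 != b2.
  apply/eqP => E; have Hed : e b2 u by rewrite esym -E.
  have := Nb2 u Hed.
  by case/orP => /eqP E'; subst; match goal with H : is_true (?a != ?a) |- _ => by rewrite eqxx in H end.
have n_a1_a2 : a1 != a2.
  apply/eqP => E; have Hed : e a2 x1 by rewrite esym -E.
  have := Na2 x1 Hed.
  by case/orP => /eqP E'; subst; match goal with H : is_true (?a != ?a) |- _ => by rewrite eqxx in H end.
have n_a1_b2 : a1 != b2.
  apply/eqP => E; have Hed : e b2 x1 by rewrite esym -E.
  have := Nb2 x1 Hed.
  by case/orP => /eqP E'; subst; match goal with H : is_true (?a != ?a) |- _ => by rewrite eqxx in H end.
have n_b1_a2 : b1 != a2.
  apply/eqP => E; have Hed : e a2 a1 by rewrite esym -E.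
  have := Na2 a1 Hed.
  by case/orP => /eqP E'; subst; match goal with H : is_true (?a != ?a) |- _ => by rewrite eqxx in H end.
have n_b1_b2 : b1 != b2.
  apply/eqP => E; have Hed : e b2 a1 by rewrite esym -E.
  have := Nb2 a1 Hed.
  by case/orP => /eqP E'; subst; match goal with H : is_true (?a != ?a) |- _ => by rewrite eqxx in H end.
have n_a1_a3 : a1 != a3.
  apply/eqP => E; have Hed : e a3 x1 by rewrite esym -E.
  have := Na3 x1 Hed.
  by case/orP => /eqP E'; subst; match goal with H : is_true (?a != ?a) |- _ => by rewrite eqxx in H end.
have n_b1_a3 : b1 != a3.
  apply/eqP => E; have Hed : e a3 a1 by rewrite esym -E.
  have := Na3 a1 Hed.
  by case/orP => /eqP E'; subst; match goal with H : is_true (?a != ?a) |- _ => by rewrite eqxx in H end.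
have n_a2_a3 : a2 != a3.
  apply/eqP => E; have Hed : e a3 x2 by rewrite esym -E.
  have := Na3 x2 Hed.
  by case/orP => /eqP E'; subst; match goal with H : is_true (?a != ?a) |- _ => by rewrite eqxx in H end.
have n_b2_a3 : b2 != a3.
  apply/eqP => E; have Hed : e a3 a2 by rewrite esym -E.
  have := Na3 a2 Hed.
  by case/orP => /eqP E'; subst; match goal with H : is_true (?a != ?a) |- _ => by rewrite eqxx in H end.
have Uc : uniq [:: u; x1; x2; x3; a1; a2; b1; b2; a3].
  rewrite /= !inE !negb_or; repeat (apply/andP; split); try done; by rewrite eq_sym.
have W1 : w1 \notin [:: u; x1; x2; x3; a1; a2; b1; b2; a3].
  rewrite !inE !negb_or; repeat (apply/andP; split); try done; by rewrite eq_sym.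
have W2 : w2 \notin [:: u; x1; x2; x3; a1; a2; b1; b2; a3].
  rewrite !inE !negb_or; repeat (apply/andP; split); try done; by rewrite eq_sym.
have W3 : w3 \notin [:: u; x1; x2; x3; a1; a2; b1; b2; a3].
  rewrite !inE !negb_or; repeat (apply/andP; split); try done; by rewrite eq_sym.
apply: ng.
apply: (@final_step T e esym eirr u x1 a1 b1 w1 x2 a2 b2 w2 x3 a3 w3 Nu Nx1 Nx2 Nx3 Na1 Na2 Nb1 Nb2 Na3
          Eux1 Eb1w1 Eb2w2 Ea3w3 Uc W1 W2 W3 _ sc md).
move=> s0 sc0 md0 lt0; exact: (mini T _ s0 sc0 md0 lt0).
Qed.
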